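(* For $|q|<1$, with sums over $i,j,k\in\mathbb{Z}_{\ge0}$, \begin{align*} \sum \frac{q^{\frac{3}{2}i^2+j^2+\frac{1}{2}k^2+2ij+ik+jk}}{(q;q)_i(q;q)_j(q;q)_k}&=\frac{(-q^{\frac{1}{2}};q)_\infty}{(q,q^4;q^5)_\infty}, \\ \sum \frac{q^{\frac{3}{2}i^2+j^2+\frac{1}{2}k^2+2ij+ik+jk+\frac{1}{2}i+\frac{1}{2}k}}{(q;q)_i(q;q)_j(q;q)_k}&=\frac{(-q;q)_\infty}{(q,q^4;q^5)_\infty}, \\ \sum\frac{q^{\frac{3}{2}i^2+j^2+\frac{1}{2}k^2+2ij+ik+jk-\frac{1}{2}i-\frac{1}{2}k}}{(q;q)_i(q;q)_j(q;q)_k}&=2\frac{(-q;q)_\infty}{(q,q^4;q^5)_\infty}, \\ \sum\frac{q^{\frac{3}{2}i^2+j^2+\frac{1}{2}k^2+2ij+ik+jk+i+j}}{(q;q)_i(q;q)_j(q;q)_k}&=\frac{(-q^{\frac{1}{2}};q)_\infty}{(q^2,q^3;q^5)_\infty}, \\ \sum\frac{q^{\frac{3}{2}i^2+j^2+\frac{1}{2}k^2+2ij+ik+jk+\frac{3}{2}i+j+\frac{1}{2}k}}{(q;q)_i(q;q)_j(q;q)_k}&=\frac{(-q;q)_\infty}{(q^2,q^3;q^5)_\infty}, \\ \sum\frac{q^{\frac{3}{2}i^2+j^2+\frac{1}{2}k^2+2ij+ik+jk+\frac{1}{2}i+j-\frac{1}{2}k}}{(q;q)_i(q;q)_j(q;q)_k}&=2\frac{(-q;q)_\infty}{(q^2,q^3;q^5)_\infty}.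 \end{align*}
   Context: For $|q|<1$: $(a;q)_n=\prod_{k=0}^{n-1}(1-aq^k)$ ($(a;q)_0=1$), $(a;q)_\infty=\prod_{k\ge0}(1-aq^k)$, $(a_1,\dots,a_m;q)_\infty=\prod_\ell(a_\ell;q)_\infty$. Half-integer powers of $q$ are taken with respect to a fixed choice of $q^{1/2}$ (e.g. $0<q<1$). *)

(* Defs.v *)
From Stdlib Require Import Reals.
From Coquelicot Require Import Coquelicot.

Open Scope C_scope.

Fixpoint qpoch (a q : C) (n : nat) : C :=
  match n with
  | O => RtoC 1
  | S m => qpoch a q m * (RtoC 1 - a * pow_n q m)
  end.

Definition qpinf (a q : C) : C :=
  @lim C_CompleteNormedModule (filtermap (fun n => qpoch a q n) eventually).

Definition tsum3 (F : nat -> nat -> nat -> C) (N : nat) : C :=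
  sum_n (fun i => sum_n (fun j => sum_n (fun k => F i j k) N) N) N.

Definition triple_series (F : nat -> nat -> nat -> C) (l : C) : Prop :=
  filterlim (tsum3 F) eventually (locally l).

(* summand  r^E / ((q;q)_i (q;q)_j (q;q)_k)  with q = r^2, r = q^{1/2};
   E i j k is twice the exponent of q in the paper *)
Definition summand (r : C) (E : nat -> nat -> nat -> nat) (i j k : nat) : C :=
  let q := r * r in
  pow_n r (E i j k) / (qpoch q q i * qpoch q q j * qpoch q q k).

Definition Q2 (i j k : nat) : nat :=
  3*i*i + 2*j*j + k*k + 4*i*j + 2*i*k + 2*j*k.

(* Main.v *)
Require Import Defs.
From Stdlib Require Import Reals Lia Lra ZArith Psatz.
From Coquelicot Require Import Coquelicot.
Open Scope C_scope.

Definition cv (u : nat -> C) (l : C) : Prop :=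
  forall eps : R, (0 < eps)%R -> exists N, forall n, (N <= n)%nat -> (Cmod (u n - l) < eps)%R.

Lemma Cmod_minus_norm (a b : C) : Cmod (a - b) = @norm _ C_NormedModule (@minus C_AbelianGroup a b).
Proof. unfold minus, plus, opp; simpl; unfold norm; simpl; reflexivity. Qed.

Lemma cv_filterlim u l : cv u l -> filterlim u eventually (locally l).
Proof.
  intros H. apply filterlim_locally. intros eps.
  destruct (H eps (cond_pos eps)) as [N HN]. exists N. intros n Hn.
  apply (@norm_compat1 C_AbsRing C_NormedModule). rewrite <- Cmod_minus_norm. now apply HN.
Qed.

Lemma filterlim_cv u l : filterlim u eventually (locally l) -> cv u l.
Proof.
  intros H eps Heps.
  assert (Hf := @norm_factor_gt_0 _ C_NormedModule).
  assert (Hp : (0 < eps / @norm_factor _ C_NormedModule)%R).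
  { apply Rdiv_lt_0_compat; auto. }
  destruct (proj1 (filterlim_locally u l) H (mkposreal _ Hp)) as [N HN].
  exists N. intros n Hn. specialize (HN n Hn).
  apply (@norm_compat2 C_AbsRing C_NormedModule) in HN. simpl in HN. rewrite Cmod_minus_norm.
  replace eps with (@norm_factor _ C_NormedModule * (eps / @norm_factor _ C_NormedModule))%R.
  exact HN. field. lra.
Qed.

Lemma cv_unique u l1 l2 : cv u l1 -> cv u l2 -> l1 = l2.
Proof.
  intros H1 H2.
  destruct (Req_dec (Cmod (l1 - l2)) 0) as [E|E].
  - apply Cmod_eq_0 in E. replace l1 with ((l1 - l2) + l2) by ring. rewrite E. ring.
  - assert (P : (0 < Cmod (l1 - l2))%R) by (pose proof (Cmod_ge_0 (l1 - l2)); lra).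
    destruct (H1 (Cmod (l1 - l2) / 2)%R) as [N1 HN1]; [lra|].
    destruct (H2 (Cmod (l1 - l2) / 2)%R) as [N2 HN2]; [lra|].
    specialize (HN1 (N1 + N2)%nat ltac:(lia)). specialize (HN2 (N1 + N2)%nat ltac:(lia)).
    pose proof (Cmod_triangle (l1 - u (N1 + N2)%nat) (u (N1 + N2)%nat - l2)) as T.
    replace (l1 - u (N1 + N2)%nat + (u (N1 + N2)%nat - l2)) with (l1 - l2) in T by ring.
    replace (l1 - u (N1 + N2)%nat) with (- (u (N1 + N2)%nat - l1)) in T by ring.
    rewrite Cmod_opp in T. lra.
Qed.

Lemma cv_ext u v l : (forall n, u n = v n) -> cv u l -> cv v l.
Proof. intros E H eps He. destruct (H eps He) as [N HN]. exists N. intros n Hn. rewrite <- E. auto. Qed.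

Lemma cv_ext_ev u v l N0 : (forall n, (N0 <= n)%nat -> u n = v n) -> cv u l -> cv v l.
Proof. intros E H eps He. destruct (H eps He) as [N HN]. exists (N + N0)%nat. intros n Hn.
  rewrite <- E by lia. apply HN; lia. Qed.

Lemma cv_const c : cv (fun _ => c) c.
Proof. intros eps He. exists O. intros. replace (c - c) with (RtoC 0) by ring. rewrite Cmod_0. lra. Qed.

Lemma cv_plus u v a b : cv u a -> cv v b -> cv (fun n => u n + v n) (a + b).
Proof.
  intros H1 H2. apply filterlim_cv.
  apply (filterlim_comp_2 (F:=eventually) (G:=locally a) (H:=locally b) u v (@plus C_AbelianGroup)); try apply cv_filterlim; auto.
  apply (@filterlim_plus _ C_NormedModule).
Qed.

Lemma cv_mult u v a b : cv u a -> cv v b -> cv (fun n => u n * v n) (a * b).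
Proof.
  intros H1 H2 eps He.
  set (B := (Cmod b + 1)%R). set (A := (Cmod a + 1)%R).
  assert (PA : (0 < A)%R) by (unfold A; pose proof (Cmod_ge_0 a); lra).
  assert (PB : (0 < B)%R) by (unfold B; pose proof (Cmod_ge_0 b); lra).
  destruct (H2 1%R) as [N0 HN0]; [lra|].
  destruct (H1 (eps / (2 * B))%R) as [N1 HN1]. { apply Rdiv_lt_0_compat; lra. }
  destruct (H2 (eps / (2 * A))%R) as [N2 HN2]. { apply Rdiv_lt_0_compat; lra. }
  exists (N0 + N1 + N2)%nat. intros n Hn.
  specialize (HN0 n ltac:(lia)). specialize (HN1 n ltac:(lia)). specialize (HN2 n ltac:(lia)).
  assert (Hv : (Cmod (v n) <= B)%R).
  { pose proof (Cmod_triangle (v n - b) b) as T. replace (v n - b + b) with (v n) in T by ring.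
    unfold B; lra. }
  replace (u n * v n - a * b) with ((u n - a) * v n + a * (v n - b)) by ring.
  eapply Rle_lt_trans. apply Cmod_triangle. rewrite !Cmod_mult.
  assert (X1 : (Cmod (u n - a) * Cmod (v n) <= Cmod (u n - a) * B)%R).
  { apply Rmult_le_compat_l; [apply Cmod_ge_0|lra]. }
  assert (X1' : (Cmod (u n - a) * B < eps / (2 * B) * B)%R).
  { apply Rmult_lt_compat_r; lra. }
  assert (X2 : (Cmod a * Cmod (v n - b) <= A * Cmod (v n - b))%R).
  { apply Rmult_le_compat_r; [apply Cmod_ge_0|unfold A; lra]. }
  assert (X2' : (A * Cmod (v n - b) < A * (eps / (2 * A)))%R).
  { apply Rmult_lt_compat_l; lra. }
  replace (eps / (2 * B) * B)%R with (eps / 2)%R in X1' by (field; lra).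
  replace (A * (eps / (2 * A)))%R with (eps / 2)%R in X2' by (field; lra).
  lra.
Qed.

Lemma cv_scal c u a : cv u a -> cv (fun n => c * u n) (c * a).
Proof. intros; apply cv_mult; auto; apply cv_const. Qed.

Lemma cv_opp u a : cv u a -> cv (fun n => - u n) (- a).
Proof. intros H. apply cv_ext with (fun n => (-1) * u n). intros; ring.
  replace (-a) with ((-1) * a) by ring. apply cv_scal; auto. Qed.

Lemma cv_minus u v a b : cv u a -> cv v b -> cv (fun n => u n - v n) (a - b).
Proof. intros. apply cv_plus; auto. apply cv_opp; auto. Qed.

Lemma cv_inv (u : nat -> C) (a : C) : a <> 0 -> cv u a -> cv (fun n => / u n) (/ a).
Proof.
  intros Ha H eps He.
  assert (Pa : (0 < Cmod a)%R) by (apply Rnot_le_lt; intro X; apply Ha; apply Cmod_eq_0; pose proof (Cmod_ge_0 a); lra).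
  destruct (H (Cmod a / 2)%R) as [N1 HN1]; [lra|].
  destruct (H (eps * (Cmod a * Cmod a) / 2)%R) as [N2 HN2].
  { apply Rmult_lt_0_compat; [apply Rmult_lt_0_compat; [lra|nra]| lra]. }
  exists (N1 + N2)%nat. intros n Hn.
  specialize (HN1 n ltac:(lia)). specialize (HN2 n ltac:(lia)).
  assert (Hu : (Cmod a / 2 <= Cmod (u n))%R).
  { pose proof (Cmod_triangle (u n) (- (u n - a))) as T.
    replace (u n + - (u n - a)) with a in T by ring. rewrite Cmod_opp in T. lra. }
  assert (un0 : u n <> 0). { intro X. rewrite X, Cmod_0 in Hu. lra. }
  replace (/ u n - / a) with ((a - u n) / (u n * a)) by (field; auto).
  rewrite Cmod_div by (apply Cmult_neq_0; auto). rewrite Cmod_mult.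
  replace (a - u n) with (- (u n - a)) by ring. rewrite Cmod_opp.
  apply Rmult_lt_reg_r with (Cmod (u n) * Cmod a)%R. nra.
  unfold Rdiv. rewrite Rmult_assoc, Rinv_l by nra.
  apply Rlt_le_trans with (eps * (Cmod a * Cmod a) / 2)%R; [lra|].
  apply Rle_trans with (eps * (Cmod (u n) * Cmod a))%R; [|lra].
  unfold Rdiv. rewrite Rmult_assoc. apply Rmult_le_compat_l; [lra|]. nra.
Qed.

Lemma cv_div (u v : nat -> C) (a b : C) : b <> 0 -> cv u a -> cv v b -> cv (fun n => u n / v n) (a / b).
Proof. intros. apply cv_mult; auto. apply cv_inv; auto. Qed.

Lemma cv_subseq u l (f : nat -> nat) : (forall M, exists N, forall n, (N <= n)%nat -> (M <= f n)%nat) ->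
  cv u l -> cv (fun n => u (f n)) l.
Proof. intros Hf H eps He. destruct (H eps He) as [M HM]. destruct (Hf M) as [N HN].
  exists N. intros n Hn. apply HM. auto. Qed.

Lemma cv_lim u l : cv u l -> @lim C_CompleteNormedModule (filtermap u eventually) = l.
Proof.
  intros H.
  assert (PF : ProperFilter (filtermap u eventually)).
  { apply filtermap_proper_filter. apply eventually_filter. }
  assert (Hc : cauchy (filtermap u eventually)).
  { intros eps. exists l. apply (cv_filterlim u l H). apply locally_ball. }
  pose proof (@complete_cauchy C_CompleteNormedModule _ PF Hc) as Hl.
  assert (L : filterlim u eventually (locally (@lim C_CompleteNormedModule (filtermap u eventually)))).
  { apply filterlim_locally. intros eps. apply Hl. }
  apply filterlim_cv in L. eapply cv_unique; eauto.
Qed.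

Lemma cauchy_cv u : (forall eps, (0 < eps)%R -> exists N, forall m n, (N <= m)%nat -> (N <= n)%nat -> (Cmod (u m - u n) < eps)%R) ->
  cv u (@lim C_CompleteNormedModule (filtermap u eventually)).
Proof.
  intros H.
  assert (PF : ProperFilter (filtermap u eventually)).
  { apply filtermap_proper_filter. apply eventually_filter. }
  assert (Hc : cauchy (filtermap u eventually)).
  { intros eps. destruct (H eps (cond_pos eps)) as [N HN]. exists (u N).
    exists N. intros n Hn. apply (@norm_compat1 C_AbsRing C_NormedModule). rewrite <- Cmod_minus_norm. apply HN; lia. }
  pose proof (@complete_cauchy C_CompleteNormedModule _ PF Hc) as Hl.
  apply filterlim_cv. apply filterlim_locally. intros eps. apply Hl.
Qed.

Fixpoint sm (f : nat -> C) (n : nat) : C :=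
  match n with O => 0 | S m => sm f m + f m end.
Fixpoint smR (f : nat -> R) (n : nat) : R :=
  match n with O => 0%R | S m => (smR f m + f m)%R end.

Lemma sm_ext n (f g : nat -> C) : (forall k, (k < n)%nat -> f k = g k) -> sm f n = sm g n.
Proof. induction n; simpl; intros H; auto. rewrite IHn by (intros; apply H; lia). rewrite H by lia. auto. Qed.

Lemma smR_S0 (f : nat -> R) n : smR f (S n) = (smR f n + f n)%R.
Proof. reflexivity. Qed.

Lemma smR_ext n (f g : nat -> R) : (forall k, (k < n)%nat -> f k = g k) -> smR f n = smR g n.
Proof. induction n; simpl; intros H; auto. rewrite IHn by (intros; apply H; lia). rewrite H by lia. auto. Qed.

Lemma sm_plus n (f g : nat -> C) : sm (fun k => f k + g k) n = sm f n + sm g n.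
Proof. induction n; simpl. ring. rewrite IHn. ring. Qed.

Lemma sm_scal n c (f : nat -> C) : sm (fun k => c * f k) n = c * sm f n.
Proof. induction n; simpl. ring. rewrite IHn. ring. Qed.

Lemma sm_scal_r n c (f : nat -> C) : sm (fun k => f k * c) n = sm f n * c.
Proof. induction n; simpl. ring. rewrite IHn. ring. Qed.

Lemma sm_minus n (f g : nat -> C) : sm (fun k => f k - g k) n = sm f n - sm g n.
Proof. induction n; simpl. ring. rewrite IHn. ring. Qed.

Lemma sm_zero n : sm (fun _ => 0) n = 0.
Proof. induction n; simpl. auto. rewrite IHn. ring. Qed.

Lemma sm_zero' n (f : nat -> C) : (forall k, (k < n)%nat -> f k = 0) -> sm f n = 0.
Proof. intros H. rewrite (sm_ext n f (fun _ => 0)) by auto. apply sm_zero. Qed.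

Lemma sm_shift n (f : nat -> C) : sm f (S n) = f O + sm (fun k => f (S k)) n.
Proof. induction n. simpl. ring. change (sm f (S (S n))) with (sm f (S n) + f (S n)). rewrite IHn. simpl. ring. Qed.

Lemma sm_add a b (f : nat -> C) : sm f (a + b) = sm f a + sm (fun k => f (a + k)%nat) b.
Proof. induction b. simpl. rewrite Nat.add_0_r. ring. rewrite Nat.add_succ_r. simpl. rewrite IHb. ring. Qed.

Lemma sm_swap n m (f : nat -> nat -> C) :
  sm (fun i => sm (f i) m) n = sm (fun j => sm (fun i => f i j) n) m.
Proof.
  induction n; simpl. rewrite sm_zero. auto.
  rewrite IHn. rewrite <- sm_plus. auto.
Qed.

Lemma sm_rev n (f : nat -> C) : sm f n = sm (fun k => f (n - 1 - k)%nat) n.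
Proof.
  induction n. auto.
  simpl sm at 1. rewrite IHn. rewrite sm_shift.
  replace (S n - 1 - 0)%nat with n by lia.
  rewrite Cplus_comm. f_equal. apply sm_ext. intros k Hk. f_equal. lia.
Qed.

Lemma tri_swap n (f : nat -> nat -> C) :
  sm (fun j => sm (fun r => f j r) (S j)) (S n) =
  sm (fun r => sm (fun m => f (r + m)%nat r) (S (n - r))) (S n).
Proof.
  induction n.
  - simpl. ring.
  - assert (E1 : sm (fun j => sm (fun r => f j r) (S j)) (S (S n))
      = sm (fun j => sm (fun r => f j r) (S j)) (S n) + (sm (fun r => f (S n) r) (S n) + f (S n) (S n))) by reflexivity.
    assert (E2 : sm (fun r => sm (fun m => f (r + m)%nat r) (S (S n - r))) (S (S n))
      = sm (fun r => sm (fun m => f (r + m)%nat r) (S (S n - r))) (S n)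
            + sm (fun m => f (S n + m)%nat (S n)) (S (S n - S n))) by reflexivity.
    rewrite E1, E2, IHn. rewrite Nat.sub_diag.
    assert (E3 : sm (fun m => f (S n + m)%nat (S n)) 1 = f (S n) (S n)).
    { unfold sm. rewrite Nat.add_0_r. apply Cplus_0_l. }
    rewrite E3.
    rewrite (sm_ext (S n) (fun r => sm (fun m => f (r + m)%nat r) (S (S n - r)))
       (fun r => sm (fun m => f (r + m)%nat r) (S (n - r)) + f (S n) r)).
    + rewrite sm_plus. rewrite Cplus_assoc. reflexivity.
    + intros r Hr. replace (S (S n - r)) with (S (S (n - r))) by lia.
      change (sm (fun m => f (r + m)%nat r) (S (S (n - r)))) with
        (sm (fun m => f (r + m)%nat r) (S (n - r)) + f (r + S (n - r))%nat r).
      f_equal. f_equal. lia.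
Qed.

Lemma split0 n (f : nat -> C) :
  sm f (S (2 * n)) = sm (fun r => f (n + r)%nat + f (n - r)%nat) (S n) - f n.
Proof.
  replace (S (2 * n)) with (n + S n)%nat by lia. rewrite sm_add. rewrite sm_plus.
  rewrite (sm_shift n (fun r => f (n - r)%nat)). rewrite Nat.sub_0_r.
  rewrite (sm_rev n f). rewrite (sm_ext n (fun k => f (n - 1 - k)%nat) (fun k => f (n - S k)%nat)) by (intros; f_equal; lia).
  ring.
Qed.

Lemma split1 n (f : nat -> C) :
  sm f (2 * n + 2) = sm (fun r => f (n + 1 + r)%nat + f (n - r)%nat) (S n).
Proof.
  replace (2 * n + 2)%nat with (S n + S n)%nat by lia. rewrite sm_add. rewrite sm_plus.
  rewrite (sm_rev (S n) f). rewrite Cplus_comm. f_equal.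
  - apply sm_ext. intros; f_equal; lia.
  - apply sm_ext. intros; f_equal; lia.
Qed.

Lemma sum_n_sm (f : nat -> C) N : sum_n f N = sm f (S N).
Proof.
  induction N. rewrite sum_O. simpl. ring.
  rewrite sum_Sn. rewrite IHN. reflexivity.
Qed.

Lemma Cmod_sm n (f : nat -> C) : (Cmod (sm f n) <= smR (fun k => Cmod (f k)) n)%R.
Proof. induction n; simpl. rewrite Cmod_0. lra. eapply Rle_trans. apply Cmod_triangle. lra. Qed.

Lemma smR_le n (f g : nat -> R) : (forall k, (k < n)%nat -> f k <= g k)%R -> (smR f n <= smR g n)%R.
Proof. induction n; simpl; intros H. lra. specialize (IHn ltac:(intros; apply H; lia)). specialize (H n ltac:(lia)). lra. Qed.

Lemma smR_nonneg n (f : nat -> R) : (forall k, 0 <= f k)%R -> (0 <= smR f n)%R.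
Proof. induction n; simpl; intros H. lra. specialize (IHn H). specialize (H n). lra. Qed.

Lemma smR_scal n c (f : nat -> R) : smR (fun k => c * f k)%R n = (c * smR f n)%R.
Proof. induction n; simpl. ring. rewrite IHn. ring. Qed.

Lemma smR_plus n (f g : nat -> R) : smR (fun k => f k + g k)%R n = (smR f n + smR g n)%R.
Proof. induction n; simpl. ring. rewrite IHn. ring. Qed.

Lemma smR_geom n t : (0 <= t < 1)%R -> (smR (fun k => t ^ k)%R n = (1 - t ^ n) / (1 - t))%R.
Proof. intros Ht. induction n; simpl. field. lra. rewrite IHn. field. lra. Qed.

Lemma smR_geom_le n t : (0 <= t < 1)%R -> (smR (fun k => t ^ k)%R n <= 1 / (1 - t))%R.
Proof. intros Ht. rewrite smR_geom by auto. unfold Rdiv. apply Rmult_le_compat_r.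
  apply Rlt_le, Rinv_0_lt_compat; lra. pose proof (pow_le t n ltac:(lra)). lra. Qed.

Lemma smR_add a b (f : nat -> R) : smR f (a + b) = (smR f a + smR (fun k => f (a + k)%nat) b)%R.
Proof. induction b. simpl. rewrite Nat.add_0_r. ring. rewrite Nat.add_succ_r. simpl. rewrite IHb. ring. Qed.

Lemma smR_geom_tail K n t : (0 <= t < 1)%R -> (smR (fun k => t ^ (K + k))%R n <= t ^ K / (1 - t))%R.
Proof. intros Ht.
  rewrite (smR_ext n _ (fun k => t ^ K * t ^ k)%R) by (intros; apply pow_add).
  rewrite smR_scal. unfold Rdiv. replace (t ^ K * / (1 - t))%R with (t ^ K * (1 / (1 - t)))%R by (field; lra).
  apply Rmult_le_compat_l. apply pow_le; lra. apply smR_geom_le; auto. Qed.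

Lemma smR_S' (f : nat -> R) n : smR f (S n) = (f 0%nat + smR (fun k => f (S k)) n)%R.
Proof. induction n. simpl. ring. rewrite (smR_S0 f (S n)). rewrite IHn. simpl. ring. Qed.

Lemma pow_n_Cpow (x : C) n : pow_n x n = x ^ n.
Proof. induction n; simpl. reflexivity. rewrite IHn. reflexivity. Qed.

Lemma qpoch_0 a q : qpoch a q 0 = 1.
Proof. reflexivity. Qed.

Lemma qpoch_S a q n : qpoch a q (S n) = qpoch a q n * (1 - a * q ^ n).
Proof. simpl. rewrite pow_n_Cpow. reflexivity. Qed.

Lemma qpoch_add a q n m : qpoch a q (n + m) = qpoch a q n * qpoch (a * q ^ n) q m.
Proof.
  induction m. rewrite Nat.add_0_r, qpoch_0. ring.
  rewrite Nat.add_succ_r, !qpoch_S, IHm, Cpow_add_r. ring.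
Qed.

Lemma qpoch_front a q n : qpoch a q (S n) = (1 - a) * qpoch (a * q) q n.
Proof.
  replace (S n) with (1 + n)%nat by lia. rewrite qpoch_add.
  rewrite qpoch_S, qpoch_0. simpl. f_equal. ring. f_equal. ring.
Qed.

Lemma powR_le1 (x : R) n : (0 <= x <= 1)%R -> (x ^ n <= 1)%R.
Proof. intros H. rewrite <- (pow1 n). apply pow_incr. lra. Qed.

Lemma powR_decr (x : R) m n : (0 <= x <= 1)%R -> (m <= n)%nat -> (x ^ n <= x ^ m)%R.
Proof. intros H Hmn. replace n with (m + (n - m))%nat by lia. rewrite pow_add.
  pose proof (powR_le1 x (n - m) H). pose proof (pow_le x m ltac:(lra)).
  pose proof (pow_le x (n - m) ltac:(lra)). nra. Qed.

Lemma Cmod_pow_le1 (q : C) n : (Cmod q <= 1)%R -> (Cmod (q ^ n) <= 1)%R.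
Proof. intros H. rewrite Cmod_pow. apply powR_le1. split; [apply Cmod_ge_0|auto]. Qed.

Lemma one_minus_nz (z : C) : (Cmod z < 1)%R -> 1 - z <> 0.
Proof. intros H E. assert (Z : z = 1 - (1 - z)) by ring. rewrite E in Z.
  replace (1 - 0) with (RtoC 1) in Z by ring. rewrite Z, Cmod_1 in H. lra. Qed.

Lemma Cpow_S_lt1 (q : C) k : (Cmod q < 1)%R -> (Cmod (q ^ S k) < 1)%R.
Proof. intros H. rewrite Cmod_pow. apply pow_lt_1_compat. split; [apply Cmod_ge_0|auto]. lia. Qed.

Lemma qpoch_nz a q n : (Cmod a < 1)%R -> (Cmod q <= 1)%R -> qpoch a q n <> 0.
Proof.
  intros Ha Hq. induction n. rewrite qpoch_0. intro E. injection E. lra.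
  rewrite qpoch_S. apply Cmult_neq_0; auto. apply one_minus_nz.
  rewrite Cmod_mult. pose proof (Cmod_pow_le1 q n Hq). pose proof (Cmod_ge_0 a).
  pose proof (Cmod_ge_0 (q ^ n)). nra.
Qed.

Definition Pq (q : C) n := qpoch q q n.

Lemma Pq_S q n : Pq q (S n) = Pq q n * (1 - q ^ S n).
Proof. unfold Pq. rewrite qpoch_S. rewrite Cpow_S. auto. Qed.

Lemma Pq_nz q n : (Cmod q < 1)%R -> Pq q n <> 0.
Proof. intros. apply qpoch_nz; lra. Qed.

Lemma Pq_add q n m : Pq q (n + m) = Pq q n * qpoch (q ^ S n) q m.
Proof. unfold Pq. rewrite qpoch_add. rewrite Cpow_S. auto. Qed.

Fixpoint tri n := match n with O => O | S m => (tri m + m)%nat end.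

Definition qb (q : C) n k : C := if Nat.leb k n then Pq q n / (Pq q k * Pq q (n - k)) else 0.

Lemma qb_gt q n k : (n < k)%nat -> qb q n k = 0.
Proof. intros H. unfold qb. destruct (Nat.leb_spec k n). lia. auto. Qed.

Lemma qb_le q n k : (k <= n)%nat -> qb q n k = Pq q n / (Pq q k * Pq q (n - k)).
Proof. intros H. unfold qb. destruct (Nat.leb_spec k n). auto. lia. Qed.

Lemma qb_0 q n : (Cmod q < 1)%R -> qb q n 0 = 1.
Proof. intros. rewrite qb_le by lia. rewrite Nat.sub_0_r. unfold Pq at 2. rewrite qpoch_0.
  field. apply Pq_nz; auto. Qed.

Lemma qb_n q n : (Cmod q < 1)%R -> qb q n n = 1.
Proof. intros. rewrite qb_le by lia. rewrite Nat.sub_diag. unfold Pq at 3. rewrite qpoch_0.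
  field. apply Pq_nz; auto. Qed.

Lemma pascal1 q n k : (Cmod q < 1)%R ->
  qb q (S n) (S k) = qb q n k + q ^ S k * qb q n (S k).
Proof.
  intros Hq.
  destruct (Nat.lt_trichotomy k n) as [H|[H|H]].
  - rewrite !qb_le by lia.
    replace n with (k + S (n - S k))%nat by lia. set (d := (n - S k)%nat).
    replace (S (k + S d) - S k)%nat with (S d) by lia.
    replace (k + S d - k)%nat with (S d) by lia.
    replace (k + S d - S k)%nat with d by lia.
    replace (S (k + S d)) with (S (S k + d)) by lia.
    replace (k + S d)%nat with (S k + d)%nat by lia.
    rewrite !Pq_S.
    assert (E : q ^ S (S k + d) = q ^ S k * q ^ S d) by (rewrite <- Cpow_add_r; f_equal; lia).
    rewrite E.
    assert (N1 := Pq_nz q k Hq). assert (N2 := Pq_nz q d Hq).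
    assert (N3 := Pq_nz q (S k) Hq). assert (N4 := Pq_nz q (S d) Hq).
    rewrite Pq_S in N3, N4.

    field. repeat split; auto; cbv beta; apply one_minus_nz; apply Cpow_S_lt1; auto.
  - subst. rewrite qb_n, qb_n, qb_gt by (auto; lia). ring.
  - rewrite !qb_gt by lia. ring.
Qed.

Lemma pascal2 q n k : (Cmod q < 1)%R ->
  qb q (S n) (S k) = q ^ (n - k) * qb q n k + qb q n (S k).
Proof.
  intros Hq.
  destruct (Nat.lt_trichotomy k n) as [H|[H|H]].
  - rewrite !qb_le by lia.
    replace n with (k + S (n - S k))%nat by lia. set (d := (n - S k)%nat).
    replace (S (k + S d) - S k)%nat with (S d) by lia.
    replace (k + S d - k)%nat with (S d) by lia.
    replace (k + S d - S k)%nat with d by lia.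
    replace (S (k + S d)) with (S (S k + d)) by lia.
    replace (k + S d)%nat with (S k + d)%nat by lia.
    replace (S k + d - k)%nat with (S d) by lia.
    rewrite !Pq_S.
    assert (E : q ^ S (S k + d) = q ^ S k * q ^ S d) by (rewrite <- Cpow_add_r; f_equal; lia).
    rewrite E.
    assert (N1 := Pq_nz q k Hq). assert (N2 := Pq_nz q d Hq).
    field. repeat split; auto; cbv beta; apply one_minus_nz; apply Cpow_S_lt1; auto.
  - subst. rewrite qb_n, qb_n, qb_gt by (auto; lia). rewrite Nat.sub_diag. simpl. ring.
  - rewrite !qb_gt by lia. ring.
Qed.

Lemma pascal1' q n k : (Cmod q < 1)%R ->
  qb q (S n) k = q ^ k * qb q n k + match k with O => 0 | S j => qb q n j end.
Proof. intros Hq. destruct k. rewrite !qb_0 by auto. simpl. ring.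
  rewrite pascal1 by auto. ring. Qed.

Lemma pascal2' q n k : (Cmod q < 1)%R ->
  qb q (S n) k = qb q n k + match k with O => 0 | S j => q ^ (n - j) * qb q n j end.
Proof. intros Hq. destruct k. rewrite !qb_0 by auto. ring.
  rewrite pascal2 by auto. ring. Qed.

Lemma sm_last0 n (f : nat -> C) : f n = 0 -> sm f (S n) = sm f n.
Proof. intros H. simpl. rewrite H. ring. Qed.

Lemma sm_first0 n (f : nat -> C) : f O = 0 -> sm f (S n) = sm (fun k => f (S k)) n.
Proof. intros H. rewrite sm_shift, H. ring. Qed.

Lemma Cpow_eq (q : C) a b : a = b -> q ^ a = q ^ b.
Proof. intros; subst; auto. Qed.

Lemma Cpow_m1_S n : (-1) ^ S n = - ((-1) ^ n).
Proof. rewrite Cpow_S. ring. Qed.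

Lemma qbinom q z N : (Cmod q < 1)%R ->
  sm (fun k => qb q N k * q ^ tri k * z ^ k) (S N) = qpoch (- z) q N.
Proof.
  intros Hq. induction N.
  - simpl. rewrite qb_0 by auto. ring.
  - rewrite (sm_ext _ _ (fun k => qb q N k * q ^ tri k * z ^ k +
        match k with O => 0 | S j => q ^ (N - j) * qb q N j * q ^ tri k * z ^ k end)).
    2: { intros k _. rewrite pascal2' by auto. destruct k; ring. }
    rewrite sm_plus. rewrite sm_last0 by (rewrite qb_gt by lia; ring). rewrite IHN.
    rewrite sm_first0 by ring.
    rewrite (sm_ext _ _ (fun j => (z * q ^ N) * (qb q N j * q ^ tri j * z ^ j))).
    2: { intros j Hj. simpl tri.
      assert (E : q ^ (N - j) * q ^ (tri j + j) = q ^ N * q ^ tri j)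
        by (rewrite <- !Cpow_add_r; apply Cpow_eq; lia).
      rewrite Cpow_S.
      transitivity ((q ^ (N - j) * q ^ (tri j + j)) * qb q N j * z * z ^ j). ring.
      rewrite E. ring. }
    rewrite sm_scal. rewrite IHN. rewrite qpoch_S. ring.
Qed.

(* the two-sided exponent T(k - m) *)
Definition ee m k := if Nat.leb m k then tri (k - m) else tri (S (m - k)).

Lemma tri_S' a b : a = S b -> tri a = (tri b + b)%nat.
Proof. intros; subst; reflexivity. Qed.

Lemma ee_E1 m j N : (j <= N)%nat -> (m <= N)%nat ->
  (N - j + ee m (S j) = N - m + ee m j)%nat.
Proof.
  intros H1 H2. unfold ee.
  destruct (Nat.leb_spec m (S j)); destruct (Nat.leb_spec m j).
  - rewrite (tri_S' (S j - m) (j - m)) by lia. lia.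
  - replace m with (S j) by lia. rewrite Nat.sub_diag.
    replace (S j - j)%nat with 1%nat by lia. simpl. lia.
  - lia.
  - rewrite (tri_S' (S (m - j)) (m - j)) by lia.
    rewrite (tri_S' (m - j) (m - S j)) by lia.
    replace (S (m - S j)) with (m - j)%nat by lia.
    rewrite (tri_S' (m - j) (m - S j)) by lia. lia.
Qed.

Lemma ee_E2 m k : (k + ee (S m) k = S m + ee m k)%nat.
Proof.
  unfold ee.
  destruct (Nat.leb_spec (S m) k); destruct (Nat.leb_spec m k).
  - rewrite (tri_S' (k - m) (k - S m)) by lia. lia.
  - lia.
  - replace k with m by lia. rewrite Nat.sub_diag.
    replace (S m - m)%nat with 1%nat by lia. simpl. lia.
  - rewrite (tri_S' (S (S m - k)) (S m - k)) by lia.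
    replace (S m - k)%nat with (S (m - k)) by lia. lia.
Qed.

Lemma ee_SS m k : ee (S m) (S k) = ee m k.
Proof. reflexivity. Qed.

Definition LL q N m x := sm (fun k => qb q N k * (-1) ^ k * q ^ (ee m k) * x ^ k) (S N).

Lemma LL_step q N m x : (Cmod q < 1)%R -> (m <= N)%nat ->
  LL q (S N) m x = (1 - x * q ^ (N - m)) * LL q N m x.
Proof.
  intros Hq Hm. unfold LL.
  rewrite (sm_ext _ _ (fun k => qb q N k * (-1) ^ k * q ^ (ee m k) * x ^ k +
        match k with O => 0 | S j => q ^ (N - j) * qb q N j * (-1) ^ k * q ^ (ee m k) * x ^ k end)).
  2: { intros k _. rewrite pascal2' by auto. destruct k; ring. }
  rewrite sm_plus. rewrite (sm_last0 (S N) (fun k => qb q N k * (-1) ^ k * q ^ (ee m k) * x ^ k)) by (rewrite qb_gt by lia; ring).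
  rewrite (sm_first0 (S N) (fun k => match k with O => 0 | S j => q ^ (N - j) * qb q N j * (-1) ^ k * q ^ (ee m k) * x ^ k end)) by reflexivity.
  set (S1 := sm (fun k => qb q N k * (-1) ^ k * q ^ (ee m k) * x ^ k) (S N)).
  rewrite (sm_ext _ _ (fun j => (- x * q ^ (N - m)) * (qb q N j * (-1) ^ j * q ^ (ee m j) * x ^ j))).
  2: { intros j Hj. cbv beta iota.
      assert (E : q ^ (N - j) * q ^ (ee m (S j)) = q ^ (N - m) * q ^ (ee m j))
        by (rewrite <- !Cpow_add_r; apply Cpow_eq; apply ee_E1; lia).
      rewrite !Cpow_S.
      transitivity (- (q ^ (N - j) * q ^ (ee m (S j))) * qb q N j * (-1) ^ j * x * x ^ j). ring.
      rewrite E. ring. }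
  rewrite sm_scal. unfold S1. ring.
Qed.

Lemma LL_diag_step q m x : (Cmod q < 1)%R ->
  LL q (S m) (S m) x = (q ^ S m - x) * LL q m m x.
Proof.
  intros Hq. unfold LL.
  rewrite (sm_ext _ _ (fun k => q ^ k * qb q m k * (-1) ^ k * q ^ (ee (S m) k) * x ^ k +
        match k with O => 0 | S j => qb q m j * (-1) ^ k * q ^ (ee (S m) k) * x ^ k end)).
  2: { intros k _. rewrite pascal1' by auto. destruct k; ring. }
  rewrite sm_plus. rewrite (sm_last0 (S m) (fun k => q ^ k * qb q m k * (-1) ^ k * q ^ (ee (S m) k) * x ^ k)) by (rewrite qb_gt by lia; ring).
  rewrite (sm_first0 (S m) (fun k => match k with O => 0 | S j => qb q m j * (-1) ^ k * q ^ (ee (S m) k) * x ^ k end)) by reflexivity.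
  rewrite (sm_ext (S m) (fun k => q ^ k * qb q m k * (-1) ^ k * q ^ (ee (S m) k) * x ^ k)
     (fun k => q ^ S m * (qb q m k * (-1) ^ k * q ^ (ee m k) * x ^ k))).
  2: { intros k Hk.
      assert (E : q ^ k * q ^ (ee (S m) k) = q ^ S m * q ^ (ee m k))
        by (rewrite <- !Cpow_add_r; apply Cpow_eq; apply ee_E2).
      transitivity ((q ^ k * q ^ (ee (S m) k)) * qb q m k * (-1) ^ k * x ^ k). ring.
      rewrite E. ring. }
  rewrite (sm_ext (S m) (fun j => qb q m j * (-1) ^ S j * q ^ (ee (S m) (S j)) * x ^ S j)
     (fun j => - x * (qb q m j * (-1) ^ j * q ^ (ee m j) * x ^ j))).
  2: { intros j Hj. cbv beta iota. rewrite ee_SS, !Cpow_S. ring. }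
  rewrite !sm_scal. ring.
Qed.

Fixpoint Rm (q x : C) m : C := match m with O => 1 | S m' => Rm q x m' * (q ^ S m' - x) end.

Lemma LL_diag q m x : (Cmod q < 1)%R -> LL q m m x = Rm q x m.
Proof.
  intros Hq. induction m.
  - unfold LL. simpl. rewrite qb_0 by auto. unfold ee. simpl. ring.
  - rewrite LL_diag_step by auto. rewrite IHm. simpl. ring.
Qed.

Lemma LL_gen q N m x : (Cmod q < 1)%R -> (m <= N)%nat ->
  LL q N m x = Rm q x m * qpoch x q (N - m).
Proof.
  intros Hq Hm. replace N with (m + (N - m))%nat by lia.
  generalize (N - m)%nat. clear N Hm. intros d. induction d.
  - rewrite Nat.add_0_r, Nat.sub_diag, qpoch_0, LL_diag by auto. ring.
  - rewrite Nat.add_succ_r. rewrite LL_step by (auto; lia). rewrite IHd.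
    replace (S (m + d) - m)%nat with (S (m + d - m)) by lia. rewrite qpoch_S.
    replace (m + d - m)%nat with d by lia. ring.
Qed.

Definition Ds q A x := sm (fun m => qb q A m * q ^ (m * m) * x ^ m * qpoch (x * q ^ S m) q (A - m)) (S A).

Lemma Ds_one q A x : (Cmod q < 1)%R -> Ds q A x = 1.
Proof.
  intros Hq. revert x. induction A; intros x.
  - unfold Ds. simpl. rewrite qb_0 by auto. ring.
  - unfold Ds.
    rewrite (sm_ext _ _ (fun m => q ^ m * qb q A m * q ^ (m * m) * x ^ m * qpoch (x * q ^ S m) q (S A - m) +
        match m with O => 0 | S j => qb q A j * q ^ (m * m) * x ^ m * qpoch (x * q ^ S m) q (S A - m) end)).
    2: { intros k _. rewrite pascal1' by auto. destruct k; ring. }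
    rewrite sm_plus. rewrite (sm_last0 (S A) (fun m => q ^ m * qb q A m * q ^ (m * m) * x ^ m * qpoch (x * q ^ S m) q (S A - m))) by (rewrite qb_gt by lia; ring).
    rewrite (sm_first0 (S A) (fun m => match m with O => 0 | S j => qb q A j * q ^ (m * m) * x ^ m * qpoch (x * q ^ S m) q (S A - m) end)) by reflexivity.
    set (P := fun m => qb q A m * q ^ (m * m) * (x * q) ^ m * qpoch ((x * q) * q ^ S m) q (A - m)).
    set (Q := fun m => qb q A m * q ^ (m * m) * (x * q) ^ m * (x * q ^ S m) * qpoch ((x * q) * q ^ S m) q (A - m)).
    rewrite (sm_ext (S A) _ (fun m => P m - Q m)).
    2: { intros m Hm. unfold P, Q.
      replace (S A - m)%nat with (S (A - m)) by lia. rewrite qpoch_front.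
      rewrite Cpow_mult_l.
      replace (x * q ^ S m * q) with (x * q * q ^ S m) by ring. ring. }
    set (SPQ := sm (fun m => P m - Q m) (S A)).
    rewrite (sm_ext (S A) _ Q).
    2: { intros j Hj. unfold Q. cbv beta iota.
      replace (S A - S j)%nat with (A - j)%nat by lia.
      replace (x * q ^ S (S j)) with (x * q * q ^ S j) by (rewrite (Cpow_S q (S j)); ring).
      replace (S j * S j)%nat with (j * j + j + S j)%nat by nia.
      rewrite !Cpow_add_r, Cpow_mult_l, (Cpow_S x j). ring. }
    unfold SPQ. rewrite sm_minus.
    assert (HP : sm P (S A) = Ds q A (x * q)) by reflexivity.
    rewrite HP, IHA. ring.
Qed.

Lemma m1pow_sq r : (-1) ^ r * (-1) ^ r = 1.
Proof. rewrite <- Cpow_mult_l. replace ((-1) * (-1)) with (RtoC 1) by ring. apply Cpow_1_l. Qed.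

Lemma m1pow_sub n r : (r <= n)%nat -> (-1) ^ (n - r) = (-1) ^ n * (-1) ^ r.
Proof.
  intros H. replace n with ((n - r) + r)%nat at 2 by lia. rewrite Cpow_add_r.
  rewrite <- Cmult_assoc, m1pow_sq. ring.
Qed.

Lemma qb_sym q n r : (r <= n)%nat -> qb q (2 * n) (n - r) = qb q (2 * n) (n + r).
Proof. intros H. rewrite !qb_le by lia.
  replace (2 * n - (n - r))%nat with (n + r)%nat by lia.
  replace (2 * n - (n + r))%nat with (n - r)%nat by lia. f_equal. ring. Qed.

Lemma qb_sym1 q n r : (r <= n)%nat -> qb q (2 * n + 1) (n - r) = qb q (2 * n + 1) (n + 1 + r).
Proof. intros H. rewrite !qb_le by lia.
  replace (2 * n + 1 - (n - r))%nat with (n + 1 + r)%nat by lia.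
  replace (2 * n + 1 - (n + 1 + r))%nat with (n - r)%nat by lia. f_equal. ring. Qed.

Lemma Cpow_opp (z : C) n : (- z) ^ n = (-1) ^ n * z ^ n.
Proof. replace (- z) with ((-1) * z) by ring. apply Cpow_mult_l. Qed.

Lemma Cmult_eq0_l (c x : C) : c <> 0 -> c * x = 0 -> x = 0.
Proof. intros H E. replace x with (/ c * (c * x)) by (field; auto). rewrite E. ring. Qed.

Lemma Cmult_cancel_l (c x y : C) : c <> 0 -> c * x = c * y -> x = y.
Proof. intros H E. replace x with (/ c * (c * x)) by (field; auto). rewrite E. field. auto. Qed.

Definition pair q s (al be : nat -> C) : Prop :=
  forall n, be n = sm (fun r => al r / (Pq q (n - r) * Pq q (n + r + s))) (S n).

Lemma F2 q s n r : (Cmod q < 1)%R -> (r <= n)%nat ->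
  sm (fun m => q ^ ((r + m) * (r + m) + s * (r + m)) /
        (Pq q (n - (r + m)) * Pq q (r + m - r) * Pq q (r + m + r + s))) (S (n - r))
  = q ^ (r * r + s * r) / (Pq q (n - r) * Pq q (n + r + s)).
Proof.
  intros Hq Hr.
  set (A := (n - r)%nat). set (x := q ^ (2 * r + s)).
  rewrite (sm_ext _ _ (fun m => (q ^ (r * r + s * r) / (Pq q A * Pq q (n + r + s))) *
      (qb q A m * q ^ (m * m) * x ^ m * qpoch (x * q ^ S m) q (A - m)))).
  - rewrite sm_scal. assert (D := Ds_one q A x Hq). unfold Ds in D. rewrite D. ring.
  - intros m Hm. unfold A in *.
    replace (n - (r + m))%nat with (n - r - m)%nat by lia.
    replace (r + m - r)%nat with m by lia.
    replace (r + m + r + s)%nat with (2 * r + s + m)%nat by lia.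
    rewrite qb_le by lia.
    unfold x. rewrite <- Cpow_mult_r. rewrite <- Cpow_add_r.
    replace (2 * r + s + S m)%nat with (S (2 * r + s + m)) by lia.
    assert (E : Pq q (2 * r + s + m + (n - r - m)) = Pq q (2 * r + s + m) * qpoch (q ^ S (2 * r + s + m)) q (n - r - m))
      by apply Pq_add.
    replace (2 * r + s + m + (n - r - m))%nat with (n + r + s)%nat in E by lia.
    assert (Z : qpoch (q ^ S (2 * r + s + m)) q (n - r - m) = Pq q (n + r + s) / Pq q (2 * r + s + m)).
    { rewrite E. field. apply Pq_nz; auto. }
    rewrite Z.
    assert (P : q ^ ((r + m) * (r + m) + s * (r + m)) = q ^ (r * r + s * r) * q ^ (m * m) * q ^ ((2 * r + s) * m)).
    { rewrite <- !Cpow_add_r. apply Cpow_eq. nia. }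
    rewrite P.
    field. repeat split; apply Pq_nz; auto.
Qed.

Lemma bailey q s al be : (Cmod q < 1)%R -> pair q s al be ->
  pair q s (fun r => q ^ (r * r + s * r) * al r)
    (fun n => sm (fun j => q ^ (j * j + s * j) * be j / Pq q (n - j)) (S n)).
Proof.
  intros Hq Hp n.
  rewrite (sm_ext _ _ (fun j => sm (fun r => q ^ (j * j + s * j) / Pq q (n - j) *
       (al r / (Pq q (j - r) * Pq q (j + r + s)))) (S j))).
  2: { intros j Hj. rewrite (Hp j). rewrite !sm_scal. field. apply Pq_nz; auto. }
  rewrite tri_swap. apply sm_ext. intros r Hr.
  rewrite (sm_ext _ _ (fun m => al r * (q ^ ((r + m) * (r + m) + s * (r + m)) /
        (Pq q (n - (r + m)) * Pq q (r + m - r) * Pq q (r + m + r + s))))).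
  2: { intros m Hm. field. repeat split; apply Pq_nz; auto. }
  rewrite sm_scal. rewrite F2 by (auto; lia). field. split; apply Pq_nz; auto.
Qed.

Definition dlt (n : nat) : C := if Nat.eqb n 0 then 1 else 0.

Definition u0 q r : C := if Nat.eqb r 0 then 1 else (-1) ^ r * q ^ tri r * (1 + q ^ r).
Definition u1 q r : C := (-1) ^ r * q ^ tri r * (1 - q ^ (2 * r + 1)).

Lemma qpoch_one_zero q n : qpoch 1 q (S n) = 0.
Proof. rewrite qpoch_front. ring. Qed.

Lemma unit0 q : (Cmod q < 1)%R -> pair q 0 (u0 q) dlt.
Proof.
  intros Hq n. destruct n as [|n'].
  - simpl. unfold u0, dlt. simpl. unfold Pq. rewrite qpoch_0. field.
  - set (n := S n').
    assert (L : LL q (2 * n) n 1 = 0).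
    { rewrite LL_gen by (auto; lia). replace (2 * n - n)%nat with (S n') by (unfold n; lia).
      rewrite qpoch_one_zero. ring. }
    unfold LL in L. rewrite split0 in L.
    set (c := (-1) ^ n * Pq q (2 * n)).
    assert (Hc : c <> 0). { unfold c. apply Cmult_neq_0. apply Cpow_nz. intro X.
      injection X. lra. apply Pq_nz; auto. }
    assert (E : sm (fun r => qb q (2 * n) (n + r) * (-1) ^ (n + r) * q ^ ee n (n + r) * 1 ^ (n + r) +
                   qb q (2 * n) (n - r) * (-1) ^ (n - r) * q ^ ee n (n - r) * 1 ^ (n - r)) (S n) -
                qb q (2 * n) n * (-1) ^ n * q ^ ee n n * 1 ^ n
              = c * sm (fun r => u0 q r / (Pq q (n - r) * Pq q (n + r + 0))) (S n)).
    { rewrite <- sm_scal. rewrite !sm_shift.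
      rewrite Nat.add_0_r, Nat.sub_0_r. 
      assert (T0 : c * (u0 q 0 / (Pq q n * Pq q (n + 0))) = qb q (2 * n) n * (-1) ^ n * q ^ ee n n * 1 ^ n).
      { unfold u0, c. simpl Nat.eqb. cbv iota. rewrite ?Nat.sub_0_r, ?Nat.add_0_r. rewrite qb_le by lia.
        replace (2 * n - n)%nat with n by lia. unfold ee. rewrite Nat.leb_refl, Nat.sub_diag.
        simpl. rewrite Cpow_1_l. field. apply Pq_nz; auto. }
      rewrite T0.
      assert (TS : forall r, (r < n)%nat ->
        qb q (2 * n) (n + S r) * (-1) ^ (n + S r) * q ^ ee n (n + S r) * 1 ^ (n + S r) +
        qb q (2 * n) (n - S r) * (-1) ^ (n - S r) * q ^ ee n (n - S r) * 1 ^ (n - S r)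
        = c * (u0 q (S r) / (Pq q (n - S r) * Pq q (n + S r + 0)))).
      { intros r Hr. rewrite qb_sym by lia. rewrite !Cpow_1_l.
        rewrite m1pow_sub by lia. rewrite Cpow_add_r.
        unfold ee. destruct (Nat.leb_spec n (n + S r)); [|lia].
        destruct (Nat.leb_spec n (n - S r)). lia.
        replace (n + S r - n)%nat with (S r) by lia.
        replace (S (n - (n - S r))) with (S (S r)) by lia.
        rewrite (tri_S' (S (S r)) (S r)) by auto. rewrite Cpow_add_r.
        unfold u0, c. simpl Nat.eqb. cbv iota. rewrite Nat.add_0_r.
        rewrite qb_le by lia. replace (2 * n - (n + S r))%nat with (n - S r)%nat by lia.
        field. split; apply Pq_nz; auto. }
      rewrite (sm_ext n _ _ TS). ring. }
    rewrite E in L. unfold dlt. simpl Nat.eqb. cbv iota.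
    symmetry. apply (Cmult_eq0_l c); auto.
Qed.

Lemma unit1 q : (Cmod q < 1)%R -> pair q 1 (u1 q) dlt.
Proof.
  intros Hq n. destruct n as [|n'].
  - simpl. unfold u1, dlt. simpl. unfold Pq. rewrite !qpoch_S, qpoch_0. simpl. field.
    replace (1 - q * 1) with (1 - q) by ring. apply one_minus_nz; auto.
  - set (n := S n').
    assert (L : LL q (2 * n + 1) (n + 1) 1 = 0).
    { rewrite LL_gen by (auto; lia). replace (2 * n + 1 - (n + 1))%nat with (S n') by (unfold n; lia).
      rewrite qpoch_one_zero. ring. }
    unfold LL in L. replace (S (2 * n + 1)) with (2 * n + 2)%nat in L by lia. rewrite split1 in L.
    set (c := (-1) ^ (n + 1) * Pq q (2 * n + 1)).
    assert (Hc : c <> 0). { unfold c. apply Cmult_neq_0. apply Cpow_nz. intro X.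
      injection X. lra. apply Pq_nz; auto. }
    rewrite (sm_ext _ _ (fun r => c * (u1 q r / (Pq q (n - r) * Pq q (n + r + 1))))) in L.
    + rewrite sm_scal in L. unfold dlt. simpl Nat.eqb. cbv iota.
      symmetry. apply (Cmult_eq0_l c); auto.
    + intros r Hr. rewrite qb_sym1 by lia. rewrite !Cpow_1_l.
      rewrite m1pow_sub by lia.
      unfold ee. destruct (Nat.leb_spec (n + 1) (n + 1 + r)); [|lia].
      destruct (Nat.leb_spec (n + 1) (n - r)). lia.
      replace (n + 1 + r - (n + 1))%nat with r by lia.
      replace (S (n + 1 - (n - r))) with (S (S r)) by lia.
      rewrite (tri_S' (S (S r)) (S r)) by auto. rewrite (tri_S' (S r) r) by auto.
      unfold u1, c. rewrite qb_le by lia. replace (2 * n + 1 - (n + 1 + r))%nat with (n - r)%nat by lia.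
      replace (n + r + 1)%nat with (n + 1 + r)%nat by lia.
      replace (2 * r + 1)%nat with (r + S r)%nat by lia. rewrite !Cpow_add_r.
      simpl Cpow. field. split; apply Pq_nz; auto.
Qed.

Lemma bressoud q s u : (Cmod q < 1)%R -> pair q s u dlt -> forall N,
  sm (fun j => q ^ (j * j + s * j) / (Pq q j * Pq q (N - j))) (S N) =
  sm (fun r => q ^ (r * r + s * r) * (q ^ (r * r + s * r) * u r) / (Pq q (N - r) * Pq q (N + r + s))) (S N).
Proof.
  intros Hq Hp N.
  pose proof (bailey q s _ _ Hq (bailey q s _ _ Hq Hp) N) as H.
  rewrite <- H. apply sm_ext. intros j Hj.
  rewrite sm_shift. rewrite sm_zero'.
  - unfold dlt. simpl Nat.eqb. cbv iota. rewrite Nat.sub_0_r. replace (j * j + s * j)%nat with (j * j + s * j)%nat by auto.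
    replace (0 * 0 + s * 0)%nat with 0%nat by lia. simpl Cpow. field. split; apply Pq_nz; auto.
  - intros k Hk. unfold dlt. simpl Nat.eqb. cbv iota. unfold Cdiv. ring.
Qed.

Definition jc p z w r : C := (-1) ^ r * p ^ tri r * z ^ r + (if Nat.eqb r 0 then 0 else (-1) ^ r * p ^ tri r * w ^ r).

Lemma Rm_zw p z w n : z * w = p -> Rm p z n = (- z) ^ n * qpoch w p n.
Proof.
  intros E. induction n. rewrite qpoch_0. simpl Rm. simpl Cpow. ring.
  simpl Rm. rewrite IHn, qpoch_S. rewrite <- E. rewrite ?Cpow_S, ?Cpow_mult_l. ring.
Qed.

Lemma jtp_finite p z w n : (Cmod p < 1)%R -> z * w = p -> z <> 0 ->
  qpoch z p n * qpoch w p n = sm (fun r => qb p (2 * n) (n + r) * jc p z w r) (S n).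
Proof.
  intros Hp E Hz.
  assert (L := LL_gen p (2 * n) n z Hp ltac:(lia)).
  replace (2 * n - n)%nat with n in L by lia. rewrite Rm_zw with (w := w) in L by auto.
  pose (f := fun k => qb p (2 * n) k * (-1) ^ k * p ^ ee n k * z ^ k).
  assert (L' : sm f (S (2 * n)) = (- z) ^ n * qpoch w p n * qpoch z p n) by exact L.
  clear L. rename L' into L. rewrite split0 in L.
  assert (EE : sm (fun r => f (n + r)%nat + f (n - r)%nat) (S n) - f n =
               (- z) ^ n * sm (fun r => qb p (2 * n) (n + r) * jc p z w r) (S n)).
  { rewrite <- sm_scal. rewrite !sm_shift.
    assert (T0 : (- z) ^ n * (qb p (2 * n) (n + 0) * jc p z w 0) = f n).
    { unfold jc, f. simpl Nat.eqb. cbv iota. unfold ee. rewrite Nat.leb_refl, Nat.sub_diag.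
      rewrite Nat.add_0_r. simpl tri. rewrite Cpow_opp. simpl Cpow. ring. }
    assert (TS : forall r, (r < n)%nat -> f (n + S r)%nat + f (n - S r)%nat =
        (- z) ^ n * (qb p (2 * n) (n + S r) * jc p z w (S r))).
    { intros r Hr. unfold f. rewrite qb_sym by lia.
      rewrite m1pow_sub by lia.
      unfold ee. destruct (Nat.leb_spec n (n + S r)); [|lia].
      destruct (Nat.leb_spec n (n - S r)). lia.
      replace (n + S r - n)%nat with (S r) by lia.
      replace (S (n - (n - S r))) with (S (S r)) by lia.
      rewrite (tri_S' (S (S r)) (S r)) by auto.
      unfold jc. simpl Nat.eqb. cbv iota.
      rewrite !Cpow_add_r. rewrite Cpow_opp.
      assert (Z : z ^ (n - S r) * z ^ S r = z ^ n) by (rewrite <- Cpow_add_r; f_equal; lia).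
      replace (p ^ S r) with (z ^ S r * w ^ S r) by (rewrite <- E; symmetry; apply Cpow_mult_l).
      transitivity (qb p (2 * n) (n + S r) * (-1) ^ n * (-1) ^ S r * p ^ tri (S r) *
        ((z ^ (n - S r) * z ^ S r) * w ^ S r + z ^ n * z ^ S r)). ring.
      rewrite Z. ring. }
    rewrite (sm_ext n _ _ TS). rewrite Nat.add_0_r in T0. rewrite Nat.add_0_r, Nat.sub_0_r.
    rewrite <- T0. ring. }
  rewrite EE in L.
  apply (Cmult_cancel_l ((- z) ^ n)).
  { apply Cpow_nz. intro X. apply Hz. replace z with (- - z) by ring. rewrite X. ring. }
  transitivity ((- z) ^ n * qpoch w p n * qpoch z p n). ring. rewrite <- L. reflexivity.
Qed.

Fixpoint prR (f : nat -> R) (n : nat) : R :=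
  match n with O => 1%R | S m => (prR f m * f m)%R end.

Lemma smR_S (f : nat -> R) n : smR f (S n) = (smR f n + f n)%R.
Proof. reflexivity. Qed.

Lemma prR_nonneg f n : (forall k, 0 <= f k)%R -> (0 <= prR f n)%R.
Proof. intros H. induction n; simpl. lra. specialize (H n). nra. Qed.

Lemma Cmod_qpoch_le a q n : (Cmod (qpoch a q n) <= prR (fun k => 1 + Cmod a * Cmod q ^ k) n)%R.
Proof.
  induction n. rewrite qpoch_0, Cmod_1. simpl. lra.
  rewrite qpoch_S. simpl prR. rewrite Cmod_mult.
  assert (H : (Cmod (1 - a * q ^ n) <= 1 + Cmod a * Cmod q ^ n)%R).
  { eapply Rle_trans. apply Cmod_triangle. rewrite Cmod_opp, Cmod_1, Cmod_mult, Cmod_pow. lra. }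
  apply Rmult_le_compat; auto; apply Cmod_ge_0.
Qed.

Lemma prR_exp_bound A t n : (0 <= A)%R -> (0 <= t < 1)%R ->
  (prR (fun k => 1 + A * t ^ k) n <= exp (A / (1 - t)))%R.
Proof.
  intros HA Ht.
  assert (G : forall n, (prR (fun k => 1 + A * t ^ k) n <= exp (A * smR (fun k => t ^ k) n))%R).
  { induction n0; simpl. rewrite Rmult_0_r, exp_0. lra.
    rewrite (Rmult_plus_distr_l A), exp_plus.
    apply Rmult_le_compat; auto.
    - apply prR_nonneg. intros. pose proof (pow_le t k ltac:(lra)). nra.
    - pose proof (pow_le t n0 ltac:(lra)). nra.
    - apply exp_ineq1_le. }
  eapply Rle_trans. apply G.
  assert (X : (A * smR (fun k => t ^ k) n <= A / (1 - t))%R).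
  { unfold Rdiv. replace (A * / (1 - t))%R with (A * (1 / (1 - t)))%R by (field; lra).
    apply Rmult_le_compat_l; auto. apply smR_geom_le; auto. }
  destruct X as [X|X]. left. apply exp_increasing; auto. rewrite X. lra.
Qed.

Lemma qpoch_bound a q n : (Cmod q < 1)%R -> (Cmod (qpoch a q n) <= exp (Cmod a / (1 - Cmod q)))%R.
Proof.
  intros Hq. eapply Rle_trans. apply Cmod_qpoch_le.
  apply prR_exp_bound. apply Cmod_ge_0. split; [apply Cmod_ge_0|auto].
Qed.

Lemma geom_small (t K eps : R) : (0 <= t < 1)%R -> (0 <= K)%R -> (0 < eps)%R ->
  exists N, forall n, (N <= n)%nat -> (K * t ^ n < eps)%R.
Proof.
  intros Ht HK He.
  destruct (pow_lt_1_zero t ltac:(rewrite Rabs_pos_eq; lra) (eps / (K + 1))) as [N HN].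
  { apply Rdiv_lt_0_compat; lra. }
  exists N. intros n Hn. specialize (HN n Hn). rewrite Rabs_pos_eq in HN by (apply pow_le; lra).
  apply Rle_lt_trans with ((K + 1) * t ^ n)%R. pose proof (pow_le t n ltac:(lra)). nra.
  apply Rmult_lt_reg_l with (/ (K + 1))%R. apply Rinv_0_lt_compat; lra.
  rewrite <- Rmult_assoc, Rinv_l, Rmult_1_l by lra. unfold Rdiv in HN. lra.
Qed.

Lemma one_minus_exp y t : (0 <= y <= t)%R -> (t < 1)%R -> (exp (- (y / (1 - t))) <= 1 - y)%R.
Proof.
  intros Hy Ht. rewrite exp_Ropp.
  assert (E := exp_ineq1_le (y / (1 - t))).
  assert (P : (0 < exp (y / (1 - t)))%R) by apply exp_pos.
  apply Rmult_le_reg_l with (exp (y / (1 - t))). auto.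
  rewrite Rinv_r by lra.
  apply Rle_trans with ((1 + y / (1 - t)) * (1 - y))%R.
  - replace ((1 + y / (1 - t)) * (1 - y))%R with (1 + y * (t - y) / (1 - t))%R by (field; lra).
    assert (0 <= y * (t - y) / (1 - t))%R. { apply Rdiv_le_0_compat; nra. } lra.
  - apply Rmult_le_compat_r; lra.
Qed.

Definition cP (t : R) : R := exp (- (1 / ((1 - t) * (1 - t)))).

Lemma Pq_lower q n : (Cmod q < 1)%R -> (cP (Cmod q) <= Cmod (Pq q n))%R.
Proof.
  intros Hq. set (t := Cmod q). assert (Ht : (0 <= t < 1)%R) by (split; [apply Cmod_ge_0|auto]).
  assert (G : forall n, (exp (- (smR (fun k => t ^ S k) n / (1 - t))) <= Cmod (Pq q n))%R).
  { induction n0.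
    - simpl. unfold Pq. rewrite qpoch_0, Cmod_1. unfold Rdiv. rewrite Rmult_0_l, Ropp_0, exp_0. lra.
    - rewrite Pq_S, Cmod_mult. rewrite smR_S. cbv beta.
      replace (- ((smR (fun k => t ^ S k) n0 + t ^ S n0) / (1 - t)))%R
        with (- (smR (fun k => t ^ S k) n0 / (1 - t)) + - (t ^ S n0 / (1 - t)))%R by (field; lra).
      rewrite exp_plus. apply Rmult_le_compat; try (left; apply exp_pos); auto.
      apply Rle_trans with (1 - t ^ S n0)%R.
      + apply one_minus_exp; [|lra]. split. apply pow_le; lra.
        replace t with (t ^ 1)%R at 2 by ring. apply powR_decr; [lra|lia].
      + pose proof (Cmod_triangle (1 - q ^ S n0) (q ^ S n0)) as T.
        replace (1 - q ^ S n0 + q ^ S n0) with (RtoC 1) in T by ring.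
        rewrite Cmod_1, Cmod_pow in T. fold t in T. lra. }
  eapply Rle_trans; [|apply G]. unfold cP. 
  assert (S1 : (smR (fun k => t ^ S k) n <= 1 / (1 - t))%R).
  { apply Rle_trans with (smR (fun k => t ^ k)%R n). apply smR_le. intros k _.
    apply powR_decr; [lra|lia]. apply smR_geom_le; auto. }
  assert (S2 : (smR (fun k => t ^ S k) n / (1 - t) <= 1 / ((1 - t) * (1 - t)))%R).
  { replace (1 / ((1 - t) * (1 - t)))%R with ((1 / (1 - t)) / (1 - t))%R by (field; lra).
    unfold Rdiv. apply Rmult_le_compat_r. apply Rlt_le, Rinv_0_lt_compat; lra. unfold Rdiv in S1. lra. }
  destruct (Req_dec (smR (fun k => t ^ S k)%R n / (1 - t)) (1 / ((1 - t) * (1 - t)))) as [E|E].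
  rewrite E. lra. left. apply exp_increasing. lra.
Qed.

Lemma cP_pos t : (0 < cP t)%R.
Proof. apply exp_pos. Qed.

Lemma qpoch_diff b q m : (Cmod q < 1)%R ->
  (Cmod (qpoch b q m - 1) <= exp (Cmod b / (1 - Cmod q)) - 1)%R.
Proof.
  intros Hq. set (t := Cmod q). assert (Ht : (0 <= t < 1)%R) by (split; [apply Cmod_ge_0|auto]).
  assert (G : (Cmod (qpoch b q m - 1) <= prR (fun k => 1 + Cmod b * t ^ k) m - 1)%R).
  { induction m.
    - rewrite qpoch_0. replace (1 - 1) with (RtoC 0) by ring. rewrite Cmod_0. simpl. lra.
    - rewrite qpoch_S. simpl prR.
      replace (qpoch b q m * (1 - b * q ^ m) - 1) with ((qpoch b q m - 1) * (1 - b * q ^ m) + - (b * q ^ m)) by ring.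
      eapply Rle_trans. apply Cmod_triangle. rewrite Cmod_mult, Cmod_opp, Cmod_mult, Cmod_pow. fold t.
      assert (H1 : (Cmod (1 - b * q ^ m) <= 1 + Cmod b * t ^ m)%R).
      { eapply Rle_trans. apply Cmod_triangle. rewrite Cmod_opp, Cmod_1, Cmod_mult, Cmod_pow. fold t. lra. }
      assert (H2 : (Cmod (qpoch b q m - 1) * Cmod (1 - b * q ^ m) <=
               (prR (fun k => 1 + Cmod b * t ^ k) m - 1) * (1 + Cmod b * t ^ m))%R).
      { apply Rmult_le_compat; auto; apply Cmod_ge_0. }
      nra. }
  eapply Rle_trans. apply G. pose proof (prR_exp_bound (Cmod b) t m (Cmod_ge_0 b) Ht). lra.
Qed.

Lemma exp_m1_le x : (0 <= x)%R -> (exp x - 1 <= x * exp x)%R.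
Proof.
  intros H. assert (E := exp_ineq1_le (- x)). rewrite exp_Ropp in E.
  assert (P := exp_pos x).
  apply Rmult_le_compat_r with (r := exp x) in E; [|lra].
  rewrite Rinv_l in E by lra. nra.
Qed.

Lemma qpoch_cv a q : (Cmod q < 1)%R -> cv (qpoch a q) (qpinf a q).
Proof.
  intros Hq. set (t := Cmod q). assert (Ht : (0 <= t < 1)%R) by (split; [apply Cmod_ge_0|auto]).
  set (X := (Cmod a / (1 - t))%R). set (Bd := exp X).
  assert (HX : (0 <= X)%R) by (apply Rdiv_le_0_compat; [apply Cmod_ge_0|lra]).
  assert (HB : (0 < Bd)%R) by apply exp_pos.
  assert (D : forall n m, (Cmod (qpoch a q (n + m) - qpoch a q n) <= (Bd * Bd * X) * t ^ n)%R).
  { intros n m. rewrite qpoch_add.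
    replace (qpoch a q n * qpoch (a * q ^ n) q m - qpoch a q n) with (qpoch a q n * (qpoch (a * q ^ n) q m - 1)) by ring.
    rewrite Cmod_mult.
    assert (B1 : (Cmod (qpoch a q n) <= Bd)%R) by apply qpoch_bound, Hq.
    assert (B2 := qpoch_diff (a * q ^ n) q m Hq).
    rewrite Cmod_mult, Cmod_pow in B2. fold t in B2.
    set (y := (Cmod a * t ^ n / (1 - t))%R) in B2.
    assert (Hy : (0 <= y <= X * t ^ n)%R).
    { unfold y, X. split. apply Rdiv_le_0_compat. pose proof (Cmod_ge_0 a). pose proof (pow_le t n ltac:(lra)). nra. lra.
      right. field. lra. }
    assert (Hyx : (y <= X)%R). { pose proof (powR_le1 t n ltac:(lra)). pose proof (pow_le t n ltac:(lra)). nra. }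
    assert (E1 : (exp y - 1 <= y * exp y)%R) by (apply exp_m1_le; lra).
    assert (E2 : (exp y <= Bd)%R). { unfold Bd. destruct (Req_dec y X) as [Z|Z]. rewrite Z. lra. left. apply exp_increasing. lra. }
    assert (E3 : (Cmod (qpoch (a * q ^ n) q m - 1) <= X * t ^ n * Bd)%R).
    { eapply Rle_trans. apply B2. eapply Rle_trans. apply E1. apply Rmult_le_compat; try lra. left; apply exp_pos. }
    apply Rle_trans with (Bd * (X * t ^ n * Bd))%R. apply Rmult_le_compat; auto; apply Cmod_ge_0.
    lra. }
  unfold qpinf. apply cauchy_cv.
  intros eps He.
  destruct (geom_small t (Bd * Bd * X) (eps / 2) Ht) as [N HN]. { assert (0 <= Bd * Bd)%R by nra. nra. } lra.
  exists N. intros m n Hm Hn.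
  assert (A1 := D N (m - N)%nat). assert (A2 := D N (n - N)%nat).
  replace (N + (m - N))%nat with m in A1 by lia. replace (N + (n - N))%nat with n in A2 by lia.
  specialize (HN N (le_n N)).
  replace (qpoch a q m - qpoch a q n) with ((qpoch a q m - qpoch a q N) - (qpoch a q n - qpoch a q N)) by ring.
  eapply Rle_lt_trans. apply Cmod_triangle. rewrite Cmod_opp. lra.
Qed.

Lemma cv_bound u l c B N0 : cv u l -> (forall n, (N0 <= n)%nat -> (Cmod (u n - c) <= B)%R) ->
  (Cmod (l - c) <= B)%R.
Proof.
  intros H HB. apply Rnot_lt_le. intro X.
  destruct (H (Cmod (l - c) - B)%R) as [N HN]. lra.
  specialize (HN (N + N0)%nat ltac:(lia)). specialize (HB (N + N0)%nat ltac:(lia)).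
  pose proof (Cmod_triangle (l - u (N + N0)%nat) (u (N + N0)%nat - c)) as T.
  replace (l - u (N + N0)%nat + (u (N + N0)%nat - c)) with (l - c) in T by ring.
  replace (l - u (N + N0)%nat) with (- (u (N + N0)%nat - l)) in T by ring. rewrite Cmod_opp in T. lra.
Qed.

Lemma cv_sm (a : nat -> nat -> C) (b : nat -> C) K :
  (forall k, cv (fun N => a N k) (b k)) -> cv (fun N => sm (a N) K) (sm b K).
Proof.
  intros H. induction K; simpl.
  - apply cv_const.
  - apply cv_plus; auto.
Qed.

Lemma sm_tail_bound (f : nat -> C) (C0 t : R) K m : (0 <= t < 1)%R -> (0 <= C0)%R ->
  (forall k, (k < m)%nat -> (Cmod (f (K + k)%nat) <= C0 * t ^ (K + k))%R) ->
  (Cmod (sm (fun k => f (K + k)%nat) m) <= C0 * t ^ K / (1 - t))%R.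
Proof.
  intros Ht HC H. eapply Rle_trans. apply Cmod_sm.
  apply Rle_trans with (smR (fun k => C0 * t ^ (K + k))%R m). apply smR_le. auto.
  rewrite smR_scal. unfold Rdiv. rewrite Rmult_assoc. apply Rmult_le_compat_l; auto.
  apply smR_geom_tail; auto.
Qed.

Lemma abs_sums (b : nat -> C) (C0 t : R) : (0 <= t < 1)%R -> (0 <= C0)%R ->
  (forall k, (Cmod (b k) <= C0 * t ^ k)%R) -> exists L, cv (sm b) L.
Proof.
  intros Ht HC H. eexists. apply cauchy_cv. intros eps He.
  destruct (geom_small t (C0 / (1 - t)) (eps / 2) Ht) as [N HN].
  { apply Rdiv_le_0_compat; lra. } lra.
  assert (T : forall n, (N <= n)%nat -> (Cmod (sm b n - sm b N) < eps / 2)%R).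
  { intros n Hn. replace n with (N + (n - N))%nat by lia. rewrite sm_add.
    replace (sm b N + sm (fun k => b (N + k)%nat) (n - N) - sm b N) with (sm (fun k => b (N + k)%nat) (n - N)) by ring.
    eapply Rle_lt_trans. apply sm_tail_bound; eauto.
    specialize (HN N (le_n N)). unfold Rdiv in *. lra. }
  exists N. intros m n Hm Hn.
  replace (sm b m - sm b n) with ((sm b m - sm b N) - (sm b n - sm b N)) by ring.
  eapply Rle_lt_trans. apply Cmod_triangle. rewrite Cmod_opp.
  pose proof (T m Hm). pose proof (T n Hn). lra.
Qed.

Lemma tannery (a : nat -> nat -> C) (b : nat -> C) (C0 t : R) (L : C) :
  (0 <= t < 1)%R -> (0 <= C0)%R ->
  (forall N k, (k <= N)%nat -> (Cmod (a N k) <= C0 * t ^ k)%R) ->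
  (forall k, cv (fun N => a N k) (b k)) -> cv (sm b) L ->
  cv (fun N => sm (a N) (S N)) L.
Proof.
  intros Ht HC Ha Hab Hb eps He.
  assert (Bb : forall k, (Cmod (b k) <= C0 * t ^ k)%R).
  { intros k. replace (b k) with (b k - 0) by ring.
    apply (cv_bound (fun N => a N k) _ 0 _ k (Hab k)). intros n Hn. replace (a n k - 0) with (a n k) by ring. auto. }
  destruct (geom_small t (C0 / (1 - t)) (eps / 3) Ht) as [K HK].
  { apply Rdiv_le_0_compat; lra. } lra.
  specialize (HK K (le_n K)).
  destruct (cv_sm a b K Hab (eps / 3)%R) as [N1 HN1]. lra.
  assert (TL : (Cmod (L - sm b K) <= C0 * t ^ K / (1 - t))%R).
  { apply (cv_bound (sm b) L (sm b K) _ K Hb). intros n Hn.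
    replace n with (K + (n - K))%nat by lia. rewrite sm_add.
    replace (sm b K + sm (fun k => b (K + k)%nat) (n - K) - sm b K) with (sm (fun k => b (K + k)%nat) (n - K)) by ring.
    apply sm_tail_bound; auto. }
  exists (N1 + K)%nat. intros N HN.
  specialize (HN1 N ltac:(lia)).
  replace (S N) with (K + (S N - K))%nat by lia. rewrite sm_add.
  assert (TA : (Cmod (sm (fun k => a N (K + k)%nat) (S N - K)) <= C0 * t ^ K / (1 - t))%R).
  { apply sm_tail_bound; auto. intros k Hk. apply Ha. lia. }
  replace (sm (a N) K + sm (fun k => a N (K + k)%nat) (S N - K) - L)
    with ((sm (a N) K - sm b K) + sm (fun k => a N (K + k)%nat) (S N - K) - (L - sm b K)) by ring.
  eapply Rle_lt_trans. apply Cmod_triangle. rewrite Cmod_opp.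
  eapply Rle_lt_trans. apply Rplus_le_compat_r. apply Cmod_triangle.
  unfold Rdiv in *. lra.
Qed.

Lemma superexp (t Z : R) : (0 <= t < 1)%R -> (0 <= Z)%R ->
  exists C0, (0 <= C0)%R /\ forall k, (t ^ tri k * Z ^ k <= C0 * (1/2) ^ k)%R.
Proof.
  intros Ht HZ.
  destruct (geom_small t Z (1/2) Ht HZ ltac:(lra)) as [K0 HK0].
  set (a := fun k => (t ^ tri k * Z ^ k)%R).
  assert (Ha : forall k, (0 <= a k)%R). { intros. unfold a. apply Rmult_le_pos; apply pow_le; lra. }
  exists (smR (fun k => a k * 2 ^ k)%R (S K0)). split.
  { apply smR_nonneg. intros. apply Rmult_le_pos; auto. apply pow_le; lra. }
  assert (Fin : forall k, (k <= K0)%nat -> (a k <= smR (fun k => a k * 2 ^ k)%R (S K0) * (1/2) ^ k)%R).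
  { intros k Hk.
    assert (X : (a k * 2 ^ k <= smR (fun k => a k * 2 ^ k)%R (S K0))%R).
    { replace (S K0) with (k + S (K0 - k))%nat by lia. rewrite smR_add.
      assert (0 <= smR (fun k => a k * 2 ^ k)%R k)%R. { apply smR_nonneg. intros. apply Rmult_le_pos; auto. apply pow_le; lra. }
      rewrite smR_S'. rewrite Nat.add_0_r.
      assert (0 <= smR (fun j => a (k + S j)%nat * 2 ^ (k + S j))%R (K0 - k))%R.
      { apply smR_nonneg. intros. apply Rmult_le_pos; auto. apply pow_le; lra. }
      lra. }
    assert (P : (2 ^ k * (1/2) ^ k = 1)%R). { rewrite <- Rpow_mult_distr. replace (2 * (1/2))%R with 1%R by field. apply pow1. }
    assert (P2 : (0 < 2 ^ k)%R) by (apply pow_lt; lra).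
    apply Rmult_le_compat_r with (r := ((1/2) ^ k)%R) in X; [|apply pow_le; lra].
    rewrite Rmult_assoc, P, Rmult_1_r in X. exact X. }
  intros k. induction k.
  - apply Fin. lia.
  - destruct (Nat.le_gt_cases (S k) K0) as [Hk|Hk]. apply Fin; auto.
    change (t ^ tri (S k) * Z ^ S k)%R with (a (S k)).
    assert (E : a (S k) = (a k * (Z * t ^ k))%R).
    { unfold a. simpl tri. rewrite pow_add. simpl pow. ring. }
    rewrite E. specialize (HK0 k ltac:(lia)).
    fold (a k) in IHk. simpl pow.
    assert (0 <= Z * t ^ k)%R. { apply Rmult_le_pos; auto. apply pow_le; lra. }
    apply Rle_trans with (a k * (1/2))%R. apply Rmult_le_compat_l; auto. lra.
    nra.
Qed.

Lemma cv_shift_sub u l k : cv u l -> cv (fun N => u (N - k)%nat) l.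
Proof. intros H. apply (cv_subseq u l (fun N => (N - k)%nat)); auto.
  intros M. exists (M + k)%nat. intros; lia. Qed.

Lemma Pinf_lower q : (Cmod q < 1)%R -> (cP (Cmod q) <= Cmod (qpinf q q))%R.
Proof.
  intros Hq. pose proof (qpoch_cv q q Hq) as H.
  destruct (Rle_or_lt (cP (Cmod q)) (Cmod (qpinf q q))) as [X|X]; auto. exfalso.
  destruct (H (cP (Cmod q) - Cmod (qpinf q q))%R) as [N HN]. lra.
  specialize (HN N (le_n N)). pose proof (Pq_lower q N Hq) as P. unfold Pq in P.
  pose proof (Cmod_triangle (qpoch q q N - qpinf q q) (qpinf q q)) as T.
  replace (qpoch q q N - qpinf q q + qpinf q q) with (qpoch q q N) in T by ring. lra.
Qed.

Lemma Pinf_nz q : (Cmod q < 1)%R -> qpinf q q <> 0.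
Proof. intros Hq E. pose proof (Pinf_lower q Hq). rewrite E, Cmod_0 in H. pose proof (cP_pos (Cmod q)). lra. Qed.

Lemma Pq_cv q : (Cmod q < 1)%R -> cv (Pq q) (qpinf q q).
Proof. intros. apply qpoch_cv; auto. Qed.

Lemma inv_Pq_bound q n : (Cmod q < 1)%R -> (Cmod (/ Pq q n) <= / cP (Cmod q))%R.
Proof. intros Hq. rewrite Cmod_inv by (apply Pq_nz; auto). apply Rinv_le_contravar. apply cP_pos. apply Pq_lower; auto. Qed.

Lemma qb_bound q N k : (Cmod q < 1)%R -> (k <= N)%nat ->
  (Cmod (qb q N k) <= exp (Cmod q / (1 - Cmod q)) * (/ cP (Cmod q) * / cP (Cmod q)))%R.
Proof.
  intros Hq Hk. rewrite qb_le by auto.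
  replace (Pq q N / (Pq q k * Pq q (N - k))) with (Pq q N * (/ Pq q k * / Pq q (N - k))) by (field; split; apply Pq_nz; auto).
  rewrite Cmod_mult, Cmod_mult.
  apply Rmult_le_compat; try apply Cmod_ge_0. apply Rmult_le_pos; apply Cmod_ge_0.
  apply qpoch_bound; auto.
  apply Rmult_le_compat; try apply Cmod_ge_0; apply inv_Pq_bound; auto.
Qed.

Lemma qb_cv q k : (Cmod q < 1)%R -> cv (fun N => qb q N k) (/ Pq q k).
Proof.
  intros Hq. apply cv_ext_ev with (N0 := k) (u := fun N => Pq q N / (Pq q k * Pq q (N - k))).
  { intros n Hn. rewrite qb_le; auto. }
  replace (/ Pq q k) with (qpinf q q / (Pq q k * qpinf q q)) by (field; split; first [apply Pinf_nz; auto | apply Pq_nz; auto]).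
  apply cv_div. apply Cmult_neq_0; [apply Pq_nz|apply Pinf_nz]; auto.
  apply Pq_cv; auto. apply cv_scal. apply cv_shift_sub. apply Pq_cv; auto.
Qed.

Lemma Cmod_m1pow r : Cmod ((-1) ^ r) = 1%R.
Proof. rewrite Cmod_pow, Cmod_R. replace (Rabs (-1)) with 1%R. apply pow1.
  rewrite Rabs_left; lra. Qed.

Lemma Cmod_tri_pow q z k : (Cmod (q ^ tri k * z ^ k) = Cmod q ^ tri k * Cmod z ^ k)%R.
Proof. rewrite Cmod_mult, !Cmod_pow. auto. Qed.

Lemma euler q z : (Cmod q < 1)%R -> cv (sm (fun k => q ^ tri k * z ^ k / Pq q k)) (qpinf (- z) q).
Proof.
  intros Hq. set (t := Cmod q). assert (Ht : (0 <= t < 1)%R) by (split; [apply Cmod_ge_0|auto]).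
  destruct (superexp t (Cmod z) Ht (Cmod_ge_0 z)) as [C1 [HC1 B1]].
  set (K := (exp (t / (1 - t)) * (/ cP t * / cP t))%R).
  assert (HK : (0 <= K)%R). { unfold K. apply Rmult_le_pos. left; apply exp_pos.
    apply Rmult_le_pos; left; apply Rinv_0_lt_compat, cP_pos. }
  destruct (abs_sums (fun k => q ^ tri k * z ^ k / Pq q k) (C1 * / cP t) (1/2)) as [L HL].
  lra. apply Rmult_le_pos; auto. left; apply Rinv_0_lt_compat, cP_pos.
  { intros k. unfold Cdiv. rewrite Cmod_mult, Cmod_tri_pow.
    pose proof (inv_Pq_bound q k Hq). fold t in H. specialize (B1 k).
    assert (0 <= t ^ tri k * Cmod z ^ k)%R by (apply Rmult_le_pos; apply pow_le; try lra; apply Cmod_ge_0).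
    apply Rle_trans with (C1 * (1/2) ^ k * / cP t)%R. apply Rmult_le_compat; auto. apply Cmod_ge_0. right; ring. }
  assert (T := tannery (fun N k => qb q N k * q ^ tri k * z ^ k) (fun k => q ^ tri k * z ^ k / Pq q k)
                 (K * C1) (1/2) L ltac:(lra) ltac:(apply Rmult_le_pos; auto)).
  assert (E : L = qpinf (- z) q).
  { eapply cv_unique. apply T.
    - intros N k Hk. rewrite <- Cmult_assoc, Cmod_mult, Cmod_tri_pow.
      rewrite Rmult_assoc. apply Rmult_le_compat; try apply Cmod_ge_0. apply Rmult_le_pos; apply pow_le; try lra; apply Cmod_ge_0.
      apply qb_bound; auto. auto.
    - intros k. replace (q ^ tri k * z ^ k / Pq q k) with (/ Pq q k * (q ^ tri k * z ^ k)) by (field; apply Pq_nz; auto).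
      apply cv_ext with (fun N => qb q N k * (q ^ tri k * z ^ k)). intros; ring.
      apply cv_mult. apply qb_cv; auto. apply cv_const.
    - auto.
    - apply cv_ext with (qpoch (- z) q). intros N. rewrite qbinom; auto. apply qpoch_cv; auto. }
  rewrite <- E. auto.
Qed.

Lemma qpinf_split a q n : (Cmod q < 1)%R -> qpinf a q = qpoch a q n * qpinf (a * q ^ n) q.
Proof.
  intros Hq. eapply cv_unique.
  - apply (cv_subseq (qpoch a q) _ (fun m => (n + m)%nat)). intros M. exists M. intros; lia.
    apply qpoch_cv; auto.
  - apply cv_ext with (fun m => qpoch a q n * qpoch (a * q ^ n) q m).
    intros m. rewrite qpoch_add. auto. apply cv_scal. apply qpoch_cv; auto.
Qed.

Lemma qpinf_m1 q : (Cmod q < 1)%R -> qpinf (-1) q = 2 * qpinf (- q) q.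
Proof.
  intros Hq. rewrite (qpinf_split (-1) q 1 Hq). rewrite qpoch_S, qpoch_0.
  replace (-1 * q ^ 1) with (- q) by (simpl; ring). simpl Cpow. f_equal. ring.
Qed.

Lemma prod5_finite q n :
  qpoch q q (5 * n) = qpoch q (q ^ 5) n * qpoch (q ^ 2) (q ^ 5) n * qpoch (q ^ 3) (q ^ 5) n
                      * qpoch (q ^ 4) (q ^ 5) n * qpoch (q ^ 5) (q ^ 5) n.
Proof.
  induction n.
  - rewrite Nat.mul_0_r, !qpoch_0. ring.
  - replace (5 * S n)%nat with (5 * n + 5)%nat by lia. rewrite qpoch_add, IHn.
    rewrite !(qpoch_S _ (q ^ 5) n). rewrite <- !Cpow_mult_r.
    replace 5%nat with (S (S (S (S (S O))))) at 1 by reflexivity.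
    rewrite !qpoch_S, qpoch_0. ring.
Qed.

Lemma Cmod_pow_lt1 (q : C) k : (Cmod q < 1)%R -> (Cmod (q ^ S k) < 1)%R.
Proof. apply Cpow_S_lt1. Qed.

Lemma prod5 q : (Cmod q < 1)%R ->
  qpinf q q = qpinf q (q ^ 5) * qpinf (q ^ 2) (q ^ 5) * qpinf (q ^ 3) (q ^ 5)
              * qpinf (q ^ 4) (q ^ 5) * qpinf (q ^ 5) (q ^ 5).
Proof.
  intros Hq. assert (H5 : (Cmod (q ^ 5) < 1)%R) by (apply Cmod_pow_lt1; auto).
  eapply cv_unique.
  - apply (cv_subseq (qpoch q q) _ (fun n => (5 * n)%nat)). intros M. exists M. intros; lia.
    apply qpoch_cv; auto.
  - apply cv_ext with (fun n => qpoch q (q ^ 5) n * qpoch (q ^ 2) (q ^ 5) n * qpoch (q ^ 3) (q ^ 5) n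
                      * qpoch (q ^ 4) (q ^ 5) n * qpoch (q ^ 5) (q ^ 5) n).
    intros n. rewrite prod5_finite. auto.
    repeat apply cv_mult; apply qpoch_cv; auto.
Qed.

Lemma cv_sm_scal_r (c : nat -> C) L k : cv (sm c) L -> cv (sm (fun j => c j * k)) (L * k).
Proof. intros H. apply cv_ext with (fun n => sm c n * k). intros; rewrite sm_scal_r; auto.
  apply cv_mult; auto. apply cv_const. Qed.

Lemma qb2_cv p r : (Cmod p < 1)%R -> cv (fun n => qb p (2 * n) (n + r)) (/ qpinf p p).
Proof.
  intros Hp. apply cv_ext_ev with (N0 := r) (u := fun n => Pq p (2 * n) / (Pq p (n + r) * Pq p (n - r))).
  { intros n Hn. rewrite qb_le by lia. f_equal. f_equal. f_equal. lia. }
  replace (/ qpinf p p) with (qpinf p p / (qpinf p p * qpinf p p)) by (field; apply Pinf_nz; auto).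
  apply cv_div. apply Cmult_neq_0; apply Pinf_nz; auto.
  apply (cv_subseq (Pq p) _ (fun n => (2 * n)%nat)). intros M; exists M; intros; lia. apply Pq_cv; auto.
  apply cv_mult. apply (cv_subseq (Pq p) _ (fun n => (n + r)%nat)). intros M; exists M; intros; lia. apply Pq_cv; auto.
  apply cv_shift_sub. apply Pq_cv; auto.
Qed.

Lemma jtp p z w : (Cmod p < 1)%R -> z * w = p -> z <> 0 ->
  cv (sm (jc p z w)) (qpinf p p * qpinf z p * qpinf w p).
Proof.
  intros Hp E Hz. set (t := Cmod p). assert (Ht : (0 <= t < 1)%R) by (split; [apply Cmod_ge_0|auto]).
  destruct (superexp t (Cmod z) Ht (Cmod_ge_0 z)) as [C1 [HC1 B1]].
  destruct (superexp t (Cmod w) Ht (Cmod_ge_0 w)) as [C2 [HC2 B2]].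
  assert (Bj : forall r, (Cmod (jc p z w r) <= (C1 + C2) * (1/2) ^ r)%R).
  { intros r. unfold jc. eapply Rle_trans. apply Cmod_triangle.
    assert (A1 : Cmod ((-1) ^ r * p ^ tri r * z ^ r) = (t ^ tri r * Cmod z ^ r)%R)
      by (rewrite !Cmod_mult, Cmod_m1pow, !Cmod_pow; fold t; ring).
    assert (A2 : Cmod ((-1) ^ r * p ^ tri r * w ^ r) = (t ^ tri r * Cmod w ^ r)%R)
      by (rewrite !Cmod_mult, Cmod_m1pow, !Cmod_pow; fold t; ring).
    specialize (B1 r). specialize (B2 r). rewrite A1.
    assert (0 <= C2 * (1/2) ^ r)%R by (apply Rmult_le_pos; auto; apply pow_le; lra).
    destruct (Nat.eqb r 0).
    - rewrite Cmod_0. nra.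
    - rewrite A2. nra. }
  set (Kp := (exp (t / (1 - t)) * (/ cP t * / cP t))%R).
  assert (HK : (0 <= Kp)%R). { unfold Kp. apply Rmult_le_pos. left; apply exp_pos.
    apply Rmult_le_pos; left; apply Rinv_0_lt_compat, cP_pos. }
  assert (HC : (0 <= C1 + C2)%R) by lra.
  destruct (abs_sums (fun r => jc p z w r * / qpinf p p) ((C1 + C2) * / cP t) (1/2)) as [L HL]. lra.
  apply Rmult_le_pos; auto. left; apply Rinv_0_lt_compat, cP_pos.
  { intros r. rewrite Cmod_mult, Cmod_inv by (apply Pinf_nz; auto).
    assert (X : (/ Cmod (qpinf p p) <= / cP t)%R). { apply Rinv_le_contravar. apply cP_pos. apply Pinf_lower; auto. }
    apply Rle_trans with ((C1 + C2) * (1/2) ^ r * / cP t)%R.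
    apply Rmult_le_compat; auto. apply Cmod_ge_0. left; apply Rinv_0_lt_compat.
    pose proof (Pinf_lower p Hp). pose proof (cP_pos t). fold t in H. lra. right; ring. }
  assert (T := tannery (fun n r => qb p (2 * n) (n + r) * jc p z w r) (fun r => jc p z w r * / qpinf p p)
                 (Kp * (C1 + C2)) (1/2) L ltac:(lra) ltac:(apply Rmult_le_pos; auto)).
  assert (EL : L = qpinf z p * qpinf w p).
  { eapply cv_unique. apply T.
    - intros N k Hk. rewrite Cmod_mult. rewrite Rmult_assoc. apply Rmult_le_compat; try apply Cmod_ge_0.
      apply qb_bound; auto. lia. auto.
    - intros k. rewrite Cmult_comm. apply cv_mult. apply qb2_cv; auto. apply cv_const.
    - auto.
    - apply cv_ext with (fun n => qpoch z p n * qpoch w p n). intros n. rewrite jtp_finite; auto.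
      apply cv_mult; apply qpoch_cv; auto. }
  apply cv_ext with (fun n => sm (fun r => jc p z w r * / qpinf p p) n * qpinf p p).
  { intros n. rewrite sm_scal_r. field. apply Pinf_nz; auto. }
  replace (qpinf p p * qpinf z p * qpinf w p) with (L * qpinf p p) by (rewrite EL; ring).
  apply cv_mult; auto. apply cv_const.
Qed.

Lemma Cinv_nz (c : C) : c <> 0 -> / c <> 0.
Proof. intros H X. assert (E : c * / c = 1) by (field; auto). rewrite X in E.
  replace (c * 0) with (RtoC 0) in E by ring. injection E. lra. Qed.

Lemma Cmod_powle (q : C) a b : (Cmod q < 1)%R -> (b <= a)%nat -> (Cmod (q ^ a) <= Cmod q ^ b)%R.
Proof. intros Hq H. rewrite Cmod_pow. apply powR_decr; auto. split; [apply Cmod_ge_0|lra]. Qed.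

Lemma bress_lim q s u : (Cmod q < 1)%R -> pair q s u dlt ->
  (forall r, (Cmod (u r) <= 2 * Cmod q ^ tri r)%R) ->
  forall J, cv (sm (fun r => q ^ (r * r + s * r) * (q ^ (r * r + s * r) * u r))) J ->
  cv (sm (fun j => q ^ (j * j + s * j) / Pq q j)) (J / qpinf q q).
Proof.
  intros Hq Hp Hu J HJ.
  set (t := Cmod q). assert (Ht : (0 <= t < 1)%R) by (split; [apply Cmod_ge_0|auto]).
  set (Kc := (/ cP t)%R). assert (HKc : (0 <= Kc)%R) by (left; apply Rinv_0_lt_compat, cP_pos).
  assert (Pn := Pinf_nz q Hq).
  assert (IB : forall n, (Cmod (/ Pq q n) <= Kc)%R) by (intros; apply inv_Pq_bound; auto).
  assert (EB : forall j, (Cmod (q ^ (j * j + s * j)) <= t ^ j)%R) by (intros; apply Cmod_powle; auto; nia).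
  destruct (abs_sums (fun j => q ^ (j * j + s * j) / Pq q j) Kc t Ht HKc) as [Lc HLc].
  { intros j. unfold Cdiv. rewrite Cmod_mult. specialize (IB j). specialize (EB j).
    rewrite Rmult_comm. apply Rmult_le_compat; auto; apply Cmod_ge_0. }
  assert (T1 := tannery (fun N j => q ^ (j * j + s * j) / (Pq q j * Pq q (N - j)))
                  (fun j => q ^ (j * j + s * j) / Pq q j * / qpinf q q) (Kc * Kc) t (Lc * / qpinf q q)
                  Ht ltac:(apply Rmult_le_pos; auto)).
  assert (T2 := tannery (fun N r => q ^ (r * r + s * r) * (q ^ (r * r + s * r) * u r) / (Pq q (N - r) * Pq q (N + r + s)))
                  (fun r => q ^ (r * r + s * r) * (q ^ (r * r + s * r) * u r) * (/ qpinf q q * / qpinf q q))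
                  (2 * (Kc * Kc)) t (J * (/ qpinf q q * / qpinf q q))
                  Ht ltac:(apply Rmult_le_pos; [lra|apply Rmult_le_pos; auto])).
  assert (E : Lc * / qpinf q q = J * (/ qpinf q q * / qpinf q q)).
  { eapply cv_unique.
    - apply T1.
      + intros N j Hj.
        replace (q ^ (j * j + s * j) / (Pq q j * Pq q (N - j))) with (q ^ (j * j + s * j) * (/ Pq q j * / Pq q (N - j)))
          by (field; split; apply Pq_nz; auto).
        rewrite !Cmod_mult. rewrite Rmult_comm. apply Rmult_le_compat; auto. apply Rmult_le_pos; apply Cmod_ge_0.
        apply Cmod_ge_0. apply Rmult_le_compat; auto; apply Cmod_ge_0.
      + intros j. apply cv_ext with (fun N => q ^ (j * j + s * j) / Pq q j * / Pq q (N - j)).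
        intros N. field. split; apply Pq_nz; auto.
        apply cv_scal. apply cv_inv; auto. apply cv_shift_sub. apply Pq_cv; auto.
      + apply cv_sm_scal_r; auto.
    - apply cv_ext with (fun N => sm (fun r => q ^ (r * r + s * r) * (q ^ (r * r + s * r) * u r) / (Pq q (N - r) * Pq q (N + r + s))) (S N)).
      { intros N. symmetry. apply bressoud; auto. }
      apply T2.
      + intros N r Hr.
        replace (q ^ (r * r + s * r) * (q ^ (r * r + s * r) * u r) / (Pq q (N - r) * Pq q (N + r + s)))
          with ((q ^ (r * r + s * r) * (q ^ (r * r + s * r) * u r)) * (/ Pq q (N - r) * / Pq q (N + r + s)))
          by (field; split; apply Pq_nz; auto).
        rewrite !Cmod_mult.
        assert (X1 : (Cmod (q ^ (r * r + s * r)) * (Cmod (q ^ (r * r + s * r)) * Cmod (u r)) <= 2 * t ^ r)%R).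
        { specialize (EB r). specialize (Hu r).
          assert (Y1 : (Cmod (q ^ (r * r + s * r)) <= 1)%R) by (apply Cmod_pow_le1; lra).
          assert (Y2 : (t ^ tri r <= 1)%R) by (apply powR_le1; lra).
          pose proof (Cmod_ge_0 (q ^ (r * r + s * r))). pose proof (Cmod_ge_0 (u r)).
          pose proof (pow_le t r ltac:(lra)). fold t in Hu. nra. }
        assert (X2 : (Cmod (/ Pq q (N - r)) * Cmod (/ Pq q (N + r + s)) <= Kc * Kc)%R).
        { apply Rmult_le_compat; auto; apply Cmod_ge_0. }
        apply Rle_trans with (2 * t ^ r * (Kc * Kc))%R. apply Rmult_le_compat; auto.
        apply Rmult_le_pos; [apply Cmod_ge_0|apply Rmult_le_pos; apply Cmod_ge_0].
        apply Rmult_le_pos; apply Cmod_ge_0. right; ring.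
      + intros r. apply cv_ext with (fun N => q ^ (r * r + s * r) * (q ^ (r * r + s * r) * u r) * (/ Pq q (N - r) * / Pq q (N + r + s))).
        intros N. field. split; apply Pq_nz; auto.
        apply cv_scal. apply cv_mult; apply cv_inv; auto. apply cv_shift_sub. apply Pq_cv; auto.
        apply (cv_subseq (Pq q) _ (fun N => (N + r + s)%nat)). intros M; exists M; intros; lia. apply Pq_cv; auto.
      + apply cv_sm_scal_r; auto. }
  assert (ELc : Lc = J / qpinf q q).
  { apply (Cmult_cancel_l (/ qpinf q q)). apply Cinv_nz; auto.
    rewrite Cmult_comm, E. field. auto. }
  rewrite <- ELc. auto.
Qed.

Lemma sm_Sc (f : nat -> C) n : sm f (S n) = sm f n + f n.
Proof. reflexivity. Qed.

Lemma tri_2 r : (2 * tri r + r = r * r)%nat.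
Proof. induction r; simpl; nia. Qed.

Lemma u0_bound q r : (Cmod q < 1)%R -> (Cmod (u0 q r) <= 2 * Cmod q ^ tri r)%R.
Proof.
  intros Hq. unfold u0. destruct (Nat.eqb r 0) eqn:E.
  - apply Nat.eqb_eq in E. subst. simpl. rewrite Cmod_1. lra.
  - rewrite !Cmod_mult, Cmod_m1pow, Cmod_pow.
    assert (X : (Cmod (1 + q ^ r) <= 2)%R).
    { eapply Rle_trans. apply Cmod_triangle. rewrite Cmod_1. pose proof (Cmod_pow_le1 q r ltac:(lra)). lra. }
    pose proof (pow_le (Cmod q) (tri r) (Cmod_ge_0 q)). nra.
Qed.

Lemma u1_bound q r : (Cmod q < 1)%R -> (Cmod (u1 q r) <= 2 * Cmod q ^ tri r)%R.
Proof.
  intros Hq. unfold u1. rewrite !Cmod_mult, Cmod_m1pow, Cmod_pow.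
  assert (X : (Cmod (1 - q ^ (2 * r + 1)) <= 2)%R).
  { eapply Rle_trans. apply Cmod_triangle. rewrite Cmod_1, Cmod_opp. pose proof (Cmod_pow_le1 q (2 * r + 1) ltac:(lra)). lra. }
  pose proof (pow_le (Cmod q) (tri r) (Cmod_ge_0 q)). nra.
Qed.

Lemma qpinf00 : qpinf 0 0 = 1.
Proof.
  eapply cv_unique. apply qpoch_cv. rewrite Cmod_0. lra.
  apply cv_ext with (fun _ => 1). intros n. induction n. rewrite qpoch_0. auto.
  rewrite qpoch_S, <- IHn. ring. apply cv_const.
Qed.

Lemma Cpow0S n : (0 : C) ^ S n = 0.
Proof. rewrite Cpow_S. ring. Qed.

Lemma RR0 s : (s <= 1)%nat ->
  cv (sm (fun n => (0 : C) ^ (n * n + s * n) / Pq 0 n)) (/ (qpinf (0 ^ (1 + s)) (0 ^ 5) * qpinf (0 ^ (4 - s)) (0 ^ 5))).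
Proof.
  intros Hs.
  replace (1 + s)%nat with (S s) by lia. replace (4 - s)%nat with (S (3 - s)) by lia.
  rewrite !Cpow0S, qpinf00. replace (/ (1 * 1)) with (RtoC 1) by field.
  apply cv_ext_ev with (N0 := 1%nat) (u := fun _ => 1); [|apply cv_const].
  intros n Hn. destruct n. lia. rewrite sm_shift. rewrite sm_zero'.
  - replace (0 * 0 + s * 0)%nat with 0%nat by lia. simpl Cpow. unfold Pq. rewrite qpoch_0. field.
  - intros k Hk. replace (S k * S k + s * S k)%nat with (S (k * S k + k + s * S k)) by nia. rewrite Cpow0S. unfold Cdiv. ring.
Qed.

Lemma jtp_m1 (p z w : C) r : jc p z w r = (-1) ^ r * p ^ tri r * z ^ r + (if Nat.eqb r 0 then 0 else (-1) ^ r * p ^ tri r * w ^ r).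
Proof. reflexivity. Qed.

Lemma term0 q r : q ^ (r * r + 0 * r) * (q ^ (r * r + 0 * r) * u0 q r) = jc (q ^ 5) (q ^ 2) (q ^ 3) r.
Proof.
  unfold jc, u0. destruct (Nat.eqb r 0) eqn:E.
  - apply Nat.eqb_eq in E. subst. simpl. ring.
  - rewrite <- !Cpow_mult_r. assert (T := tri_2 r).
    set (X1 := q ^ (r * r + 0 * r) * q ^ (r * r + 0 * r) * q ^ tri r).
    assert (M1 : X1 = q ^ (5 * tri r) * q ^ (2 * r)) by (unfold X1; rewrite <- !Cpow_add_r; apply Cpow_eq; nia).
    assert (M2 : X1 * q ^ r = q ^ (5 * tri r) * q ^ (3 * r)) by (unfold X1; rewrite <- !Cpow_add_r; apply Cpow_eq; nia).
    transitivity ((-1) ^ r * X1 + (-1) ^ r * (X1 * q ^ r)). unfold X1. ring.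
    rewrite M2, M1. ring.
Qed.

Definition aa q m : C := (-1) ^ m * (q ^ 5) ^ tri m * (q ^ 4) ^ m.
Definition bb q m : C := (-1) ^ m * (q ^ 5) ^ tri m * q ^ m.

Lemma term1 q m : q ^ (m * m + 1 * m) * (q ^ (m * m + 1 * m) * u1 q m) = aa q m + bb q (S m).
Proof.
  unfold aa, bb, u1. rewrite <- !Cpow_mult_r. assert (T := tri_2 m).
  set (X1 := q ^ (m * m + 1 * m) * q ^ (m * m + 1 * m) * q ^ tri m).
  assert (M1 : X1 = q ^ (5 * tri m) * q ^ (4 * m)) by (unfold X1; rewrite <- !Cpow_add_r; apply Cpow_eq; nia).
  assert (M2 : X1 * q ^ (2 * m + 1) = q ^ (5 * tri (S m)) * q ^ S m)
    by (unfold X1; rewrite <- !Cpow_add_r; apply Cpow_eq; simpl tri; nia).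
  rewrite (Cpow_S (-1) m).
  transitivity ((-1) ^ m * X1 - (-1) ^ m * (X1 * q ^ (2 * m + 1))). unfold X1. ring.
  rewrite M2, M1. ring.
Qed.

Lemma sm_v1 q n : sm (fun m => q ^ (m * m + 1 * m) * (q ^ (m * m + 1 * m) * u1 q m)) (S n)
  = sm (jc (q ^ 5) (q ^ 4) q) (S n) + bb q (S n).
Proof.
  induction n.
  - unfold sm. rewrite term1. unfold jc, aa, bb. simpl Nat.eqb. cbv iota. simpl tri. simpl Cpow. ring.
  - rewrite (sm_Sc _ (S n)). rewrite IHn. rewrite (sm_Sc (jc _ _ _) (S n)). rewrite term1.
    unfold jc, aa, bb. simpl Nat.eqb. cbv iota. ring.
Qed.

Lemma RRq q s : (Cmod q < 1)%R -> q <> 0 -> (s <= 1)%nat ->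
  cv (sm (fun n => q ^ (n * n + s * n) / Pq q n)) (/ (qpinf (q ^ (1 + s)) (q ^ 5) * qpinf (q ^ (4 - s)) (q ^ 5))).
Proof.
  intros Hq Hq0 Hs.
  assert (H5 : (Cmod (q ^ 5) < 1)%R) by (apply Cmod_pow_lt1; auto).
  assert (P := prod5 q Hq). assert (Pn := Pinf_nz q Hq). rewrite P in Pn.
  assert (N1 : qpinf q (q ^ 5) <> 0) by (intro X; apply Pn; rewrite X; ring).
  assert (N2 : qpinf (q ^ 2) (q ^ 5) <> 0) by (intro X; apply Pn; rewrite X; ring).
  assert (N3 : qpinf (q ^ 3) (q ^ 5) <> 0) by (intro X; apply Pn; rewrite X; ring).
  assert (N4 : qpinf (q ^ 4) (q ^ 5) <> 0) by (intro X; apply Pn; rewrite X; ring).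
  assert (N5 : qpinf (q ^ 5) (q ^ 5) <> 0) by (intro X; apply Pn; rewrite X; ring).
  destruct s as [|[|s']]; [| |lia].
  -
    assert (J := jtp (q ^ 5) (q ^ 2) (q ^ 3) H5 ltac:(rewrite <- Cpow_add_r; auto) ltac:(apply Cpow_nz; auto)).
    assert (J' : cv (sm (fun r => q ^ (r * r + 0 * r) * (q ^ (r * r + 0 * r) * u0 q r)))
                   (qpinf (q ^ 5) (q ^ 5) * qpinf (q ^ 2) (q ^ 5) * qpinf (q ^ 3) (q ^ 5))).
    { apply cv_ext with (sm (jc (q ^ 5) (q ^ 2) (q ^ 3))); auto. intros n. apply sm_ext. intros. rewrite term0. auto. }
    assert (B := bress_lim q 0 (u0 q) Hq (unit0 q Hq) (fun r => u0_bound q r Hq) _ J').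
    replace (/ (qpinf (q ^ (1 + 0)) (q ^ 5) * qpinf (q ^ (4 - 0)) (q ^ 5)))
      with (qpinf (q ^ 5) (q ^ 5) * qpinf (q ^ 2) (q ^ 5) * qpinf (q ^ 3) (q ^ 5) / qpinf q q).
    apply B. rewrite P. simpl (1 + 0)%nat. simpl (4 - 0)%nat. rewrite Cpow_1_r. field. repeat split; auto.
  -
    assert (J := jtp (q ^ 5) (q ^ 4) q H5 ltac:(rewrite Cmult_comm, <- (Cpow_S q 4); auto) ltac:(apply Cpow_nz; auto)).
    assert (J' : cv (sm (fun r => q ^ (r * r + 1 * r) * (q ^ (r * r + 1 * r) * u1 q r)))
                   (qpinf (q ^ 5) (q ^ 5) * qpinf (q ^ 4) (q ^ 5) * qpinf q (q ^ 5))).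
    { apply cv_ext_ev with (N0 := 1%nat) (u := fun n => sm (jc (q ^ 5) (q ^ 4) q) n + bb q n).
      { intros n Hn. destruct n. lia. rewrite sm_v1. auto. }
      replace (qpinf (q ^ 5) (q ^ 5) * qpinf (q ^ 4) (q ^ 5) * qpinf q (q ^ 5))
        with (qpinf (q ^ 5) (q ^ 5) * qpinf (q ^ 4) (q ^ 5) * qpinf q (q ^ 5) + 0) by ring.
      apply cv_plus; auto.
      intros eps He. destruct (geom_small (Cmod q) 1 eps ltac:(split; [apply Cmod_ge_0|auto]) ltac:(lra) He) as [N HN].
      exists N. intros n Hn. specialize (HN n Hn). replace (bb q n - 0) with (bb q n) by ring.
      unfold bb. rewrite !Cmod_mult, Cmod_m1pow, !Cmod_pow.
      assert (Y : (Cmod (q ^ 5) ^ tri n <= 1)%R) by (apply powR_le1; split; [apply Cmod_ge_0|lra]).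
      rewrite Cmod_pow in Y. pose proof (pow_le (Cmod q) n (Cmod_ge_0 q)).
      pose proof (pow_le (Cmod q ^ 5) (tri n) (pow_le _ _ (Cmod_ge_0 q))). nra. }
    assert (B := bress_lim q 1 (u1 q) Hq (unit1 q Hq) (fun r => u1_bound q r Hq) _ J').
    replace (/ (qpinf (q ^ (1 + 1)) (q ^ 5) * qpinf (q ^ (4 - 1)) (q ^ 5)))
      with (qpinf (q ^ 5) (q ^ 5) * qpinf (q ^ 4) (q ^ 5) * qpinf q (q ^ 5) / qpinf q q).
    apply B. rewrite P. simpl (1 + 1)%nat. simpl (4 - 1)%nat. field. repeat split; auto.
Qed.

Lemma RR q s : (Cmod q < 1)%R -> (s <= 1)%nat ->
  cv (sm (fun n => q ^ (n * n + s * n) / Pq q n)) (/ (qpinf (q ^ (1 + s)) (q ^ 5) * qpinf (q ^ (4 - s)) (q ^ 5))).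
Proof.
  intros Hq Hs. destruct (Ceq_dec q 0) as [Z|Z].
  - subst. apply RR0; auto.
  - apply RRq; auto.
Qed.

Lemma lin_geom (s : R) : (0 <= s < 1)%R -> forall eps, (0 < eps)%R ->
  exists N0, forall N, (N0 <= N)%nat -> (INR (S N) * s ^ N < eps)%R.
Proof.
  intros Hs eps He.
  set (tau := sqrt s).
  assert (Ht : (0 <= tau < 1)%R). { unfold tau. split. apply sqrt_pos.
    rewrite <- sqrt_1. apply sqrt_lt_1_alt. lra. }
  assert (Hsq : (tau * tau = s)%R) by (unfold tau; apply sqrt_sqrt; lra).
  assert (B : forall N, (INR (S N) * tau ^ N <= 1 / (1 - tau))%R).
  { intros N. eapply Rle_trans; [|apply (smR_geom_le (S N) tau Ht)].
    rewrite <- (Rmult_1_l (tau ^ N)).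
    assert (G : forall M, (M <= N)%nat -> (INR (S M) * (1 * tau ^ N) <= smR (fun k => tau ^ k)%R (S M))%R).
    { induction M; intros HM.
      - simpl. rewrite Rmult_1_l. replace (0 + 1)%R with 1%R by ring. pose proof (powR_le1 tau N ltac:(lra)). lra.
      - rewrite S_INR. rewrite smR_S0. specialize (IHM ltac:(lia)).
        pose proof (powR_decr tau (S M) N ltac:(lra) HM). lra. }
    apply G. lia. }
  destruct (geom_small tau (1 / (1 - tau)) eps Ht) as [N0 HN0].
  { apply Rdiv_le_0_compat; lra. } auto.
  exists N0. intros N HN. specialize (HN0 N HN). specialize (B N).
  replace (s ^ N)%R with (tau ^ N * tau ^ N)%R by (rewrite <- Rpow_mult_distr, Hsq; auto).
  assert (0 <= tau ^ N)%R by (apply pow_le; lra).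
  apply Rle_lt_trans with (1 / (1 - tau) * tau ^ N)%R; [|lra].
  rewrite <- Rmult_assoc. apply Rmult_le_compat_r; auto.
Qed.

Lemma tsum3_sm F N : tsum3 F N = sm (fun i => sm (fun j => sm (F i j) (S N)) (S N)) (S N).
Proof.
  unfold tsum3. rewrite sum_n_sm. apply sm_ext. intros i _. rewrite sum_n_sm. apply sm_ext.
  intros j _. rewrite sum_n_sm. auto.
Qed.

Lemma triple_gen (F : nat -> nat -> nat -> C) (G : nat -> nat -> C) (L : C) (C0 sg : R) :
  (0 <= sg < 1)%R -> (0 <= C0)%R ->
  (forall i j k, (Cmod (F i j k) <= C0 * sg ^ (i + j + k))%R) ->
  (forall i j, cv (sm (F i j)) (G i j)) ->
  cv (sm (fun n => sm (fun i => G i (n - i)%nat) (S n))) L ->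
  triple_series F L.
Proof.
  intros Hs HC HF HG HL. unfold triple_series. apply cv_filterlim.
  apply cv_ext with (fun N => sm (fun i => sm (fun j => sm (F i j) (S N)) (S N)) (S N)).
  { intros N. rewrite tsum3_sm. auto. }
  set (C1 := (C0 / (1 - sg))%R).
  assert (HC1 : (0 <= C1)%R) by (apply Rdiv_le_0_compat; lra).
  assert (TF : forall i j M, (Cmod (G i j - sm (F i j) M) <= C1 * sg ^ (i + j) * sg ^ M)%R).
  { intros i j M. apply (cv_bound _ _ _ _ M (HG i j)). intros n Hn.
    replace n with (M + (n - M))%nat by lia. rewrite sm_add.
    replace (sm (F i j) M + sm (fun k => F i j (M + k)%nat) (n - M) - sm (F i j) M)
      with (sm (fun k => F i j (M + k)%nat) (n - M)) by ring.
    eapply Rle_trans. apply (sm_tail_bound (F i j) (C0 * sg ^ (i + j)) sg M (n - M) Hs).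
    apply Rmult_le_pos; auto; apply pow_le; lra.
    intros k _. rewrite Rmult_assoc, <- pow_add. replace (i + j + (M + k))%nat with (i + j + (M + k))%nat by lia. apply HF.
    unfold C1. right. field. lra. }
  assert (BG : forall i j, (Cmod (G i j) <= C1 * sg ^ (i + j))%R).
  { intros i j. specialize (TF i j 0%nat). simpl sm in TF. replace (G i j - 0) with (G i j) in TF by ring.
    simpl in TF. lra. }
  intros eps He.
  destruct (HL (eps / 3)%R) as [N1 HN1]. lra.
  destruct (lin_geom sg Hs (eps / 3 * (1 - sg) / (C1 + 1))%R) as [N2 HN2].
  { apply Rdiv_lt_0_compat; [apply Rmult_lt_0_compat; lra | lra]. }
  destruct (geom_small sg (C1 / ((1 - sg) * (1 - sg))) (eps / 3) Hs) as [N3 HN3].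
  { apply Rdiv_le_0_compat; auto. nra. } lra.
  exists (N1 + N2 + N3)%nat. intros N HN.
  specialize (HN1 (S N) ltac:(lia)). specialize (HN2 N ltac:(lia)). specialize (HN3 (S N) ltac:(lia)).
  set (box := sm (fun i => sm (fun j => G i j) (S N)) (S N)).
  set (trg := sm (fun n => sm (fun i => G i (n - i)%nat) (S n)) (S N)).
  assert (Hg : forall n, (smR (fun k => sg ^ k)%R n <= 1 / (1 - sg))%R) by (intros; apply smR_geom_le; auto).
  assert (Hg0 : forall n, (0 <= smR (fun k => sg ^ k)%R n)%R) by (intros; apply smR_nonneg; intros; apply pow_le; lra).
  assert (PA : (Cmod (sm (fun i => sm (fun j => sm (F i j) (S N)) (S N)) (S N) - box) <= C1 / ((1 - sg) * (1 - sg)) * sg ^ S N)%R).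
  { unfold box. rewrite <- sm_minus.
    eapply Rle_trans. apply Cmod_sm.
    apply Rle_trans with (smR (fun i => C1 * sg ^ S N * sg ^ i * smR (fun j => sg ^ j) (S N))%R (S N)).
    - apply smR_le. intros i Hi. rewrite <- sm_minus. eapply Rle_trans. apply Cmod_sm.
      rewrite <- smR_scal. apply smR_le. intros j Hj.
      replace (sm (F i j) (S N) - G i j) with (- (G i j - sm (F i j) (S N))) by ring.
      rewrite Cmod_opp. eapply Rle_trans. apply TF. rewrite pow_add. right; ring.
    - rewrite (smR_ext _ _ (fun i => (C1 * sg ^ S N * smR (fun j => sg ^ j) (S N)) * sg ^ i)%R) by (intros; ring).
      rewrite smR_scal.
      assert (0 <= C1 * sg ^ S N)%R by (apply Rmult_le_pos; auto; apply pow_le; lra).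
      specialize (Hg (S N)). specialize (Hg0 (S N)).
      apply Rle_trans with (C1 * sg ^ S N * (1 / (1 - sg)) * (1 / (1 - sg)))%R.
      apply Rmult_le_compat; auto. apply Rmult_le_pos; auto. apply Rmult_le_compat_l; auto.
      right. field. lra. }
  assert (PB : (Cmod (box - trg) <= C1 / (1 - sg) * (INR (S N) * sg ^ N))%R).
  { unfold trg. rewrite (tri_swap N (fun n i => G i (n - i)%nat)).
    unfold box. rewrite <- sm_minus. eapply Rle_trans. apply Cmod_sm.
    apply Rle_trans with (smR (fun i => C1 * sg ^ S N / (1 - sg))%R (S N)).
    - apply smR_le. intros i Hi.
      rewrite (sm_ext (S (N - i)) (fun m => G i (i + m - i)%nat) (G i)) by (intros; f_equal; lia).
      replace (S N) with (S (N - i) + i)%nat at 1 by lia. rewrite sm_add.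
      change (sm (fun j => G i j) (S (N - i))) with (sm (G i) (S (N - i))).
      replace (sm (G i) (S (N - i)) + sm (fun k => G i (S (N - i) + k)%nat) i - sm (G i) (S (N - i)))
        with (sm (fun k => G i (S (N - i) + k)%nat) i) by ring.
      eapply Rle_trans. apply (sm_tail_bound (G i) (C1 * sg ^ i) sg (S (N - i)) i Hs).
      apply Rmult_le_pos; auto; apply pow_le; lra.
      intros k _. rewrite Rmult_assoc, <- pow_add. apply BG.
      rewrite Rmult_assoc, <- pow_add. replace (i + S (N - i))%nat with (S N) by lia. right; ring.
    - clear - Hs HC1. assert (X : forall M, smR (fun _ => C1 * sg ^ S N / (1 - sg))%R M = (INR M * (C1 * sg ^ S N / (1 - sg)))%R).
      { induction M. simpl. ring. rewrite smR_S0, IHM, S_INR. ring. }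
      rewrite X. simpl pow. 
      assert (0 <= sg ^ N)%R by (apply pow_le; lra). pose proof (pos_INR (S N)).
      unfold Rdiv. apply Rle_trans with (INR (S N) * (C1 * (1 * sg ^ N) * / (1 - sg)))%R.
      apply Rmult_le_compat_l; auto. apply Rmult_le_compat_r. apply Rlt_le, Rinv_0_lt_compat; lra.
      apply Rmult_le_compat_l; auto. apply Rmult_le_compat_r; lra. right; ring. }
  replace (sm (fun i => sm (fun j => sm (F i j) (S N)) (S N)) (S N) - L)
    with ((sm (fun i => sm (fun j => sm (F i j) (S N)) (S N)) (S N) - box) + (box - trg) + (trg - L)) by ring.
  eapply Rle_lt_trans. apply Cmod_triangle. eapply Rle_lt_trans. apply Rplus_le_compat_r. apply Cmod_triangle.
  assert (X2 : (C1 / (1 - sg) * (INR (S N) * sg ^ N) < eps / 3)%R).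
  { apply Rle_lt_trans with ((C1 + 1) / (1 - sg) * (INR (S N) * sg ^ N))%R.
    apply Rmult_le_compat_r. apply Rmult_le_pos. apply pos_INR. apply pow_le; lra.
    unfold Rdiv. apply Rmult_le_compat_r. apply Rlt_le, Rinv_0_lt_compat; lra. lra.
    apply Rmult_lt_reg_l with ((1 - sg) / (C1 + 1))%R. apply Rdiv_lt_0_compat; lra.
    replace ((1 - sg) / (C1 + 1) * ((C1 + 1) / (1 - sg) * (INR (S N) * sg ^ N)))%R with (INR (S N) * sg ^ N)%R by (field; lra).
    replace ((1 - sg) / (C1 + 1) * (eps / 3))%R with (eps / 3 * (1 - sg) / (C1 + 1))%R by (field; lra). auto. }
  unfold trg in *. lra.
Qed.

Lemma tri_ge k : (k <= S (tri k))%nat.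
Proof. induction k; simpl; lia. Qed.

Lemma sig_tri (t sg : R) k : (0 <= t <= sg)%R -> (1/2 <= sg <= 1)%R -> (t ^ tri k <= 2 * sg ^ k)%R.
Proof.
  intros Ht Hs. apply Rle_trans with (sg ^ tri k)%R. apply pow_incr; lra.
  destruct k. simpl. lra.
  apply Rle_trans with (sg ^ k)%R. apply powR_decr. lra. simpl tri. lia.
  simpl pow. assert (0 <= sg ^ k)%R by (apply pow_le; lra). nra.
Qed.

Definition FF (q w : C) (s : nat) (i j k : nat) : C :=
  q ^ ((i + j) * (i + j) + s * (i + j)) * (q ^ tri i * w ^ i / (Pq q i * Pq q j)) *
  (q ^ tri k * (w * q ^ (i + j)) ^ k / Pq q k).

Lemma main_gen q w s (F : nat -> nat -> nat -> C) :
  (Cmod q < 1)%R -> (Cmod w <= 1)%R -> (s <= 1)%nat ->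
  (forall i j k, F i j k = FF q w s i j k) ->
  triple_series F (qpinf (- w) q * / (qpinf (q ^ (1 + s)) (q ^ 5) * qpinf (q ^ (4 - s)) (q ^ 5))).
Proof.
  intros Hq Hw Hs HF.
  set (t := Cmod q). assert (Ht : (0 <= t < 1)%R) by (split; [apply Cmod_ge_0|auto]).
  set (sg := ((1 + t) / 2)%R). assert (Hsg : (0 <= sg < 1)%R) by (unfold sg; lra).
  set (Kc := (/ cP t)%R). assert (HKc : (0 <= Kc)%R) by (left; apply Rinv_0_lt_compat, cP_pos).
  assert (IB : forall n, (Cmod (/ Pq q n) <= Kc)%R) by (intros; apply inv_Pq_bound; auto).
  apply (triple_gen F (fun i j => q ^ ((i + j) * (i + j) + s * (i + j)) * (q ^ tri i * w ^ i / (Pq q i * Pq q j)) *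
            qpinf (- (w * q ^ (i + j))) q) _ (2 * (Kc * (Kc * Kc))) sg Hsg).
  - apply Rmult_le_pos. lra. apply Rmult_le_pos; auto. apply Rmult_le_pos; auto.
  - intros i j k. rewrite HF. unfold FF.
    replace (q ^ ((i + j) * (i + j) + s * (i + j)) * (q ^ tri i * w ^ i / (Pq q i * Pq q j)) *
              (q ^ tri k * (w * q ^ (i + j)) ^ k / Pq q k))
      with (q ^ ((i + j) * (i + j) + s * (i + j)) * (q ^ tri i * w ^ i) * (/ Pq q i * / Pq q j) *
            (q ^ tri k * (w * q ^ (i + j)) ^ k) * / Pq q k)
      by (field; repeat split; apply Pq_nz; auto).
    rewrite !Cmod_mult.
    assert (A1 : (Cmod (q ^ ((i + j) * (i + j) + s * (i + j))) <= sg ^ (i + j))%R).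
    { apply Rle_trans with (t ^ (i + j))%R. apply Cmod_powle; auto; nia. apply pow_incr; unfold sg; lra. }
    assert (A2 : (Cmod (q ^ tri i) * Cmod (w ^ i) <= 1)%R).
    { rewrite !Cmod_pow. pose proof (powR_le1 t (tri i) ltac:(lra)). pose proof (powR_le1 (Cmod w) i ltac:(split; [apply Cmod_ge_0|auto])).
      pose proof (pow_le t (tri i) ltac:(lra)). pose proof (pow_le (Cmod w) i (Cmod_ge_0 w)). fold t. nra. }
    assert (A3 : (Cmod (/ Pq q i) * Cmod (/ Pq q j) <= Kc * Kc)%R) by (apply Rmult_le_compat; auto; apply Cmod_ge_0).
    assert (A4 : (Cmod (q ^ tri k) * Cmod ((w * q ^ (i + j)) ^ k) <= 2 * sg ^ k)%R).
    { rewrite !Cmod_pow, Cmod_mult, Cmod_pow. fold t.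
      assert (Y : (0 <= Cmod w * t ^ (i + j) <= 1)%R).
      { split. apply Rmult_le_pos. apply Cmod_ge_0. apply pow_le; lra.
        pose proof (powR_le1 t (i + j) ltac:(lra)). pose proof (pow_le t (i + j) ltac:(lra)).
        pose proof (Cmod_ge_0 w). nra. }
      pose proof (powR_le1 _ k Y). pose proof (pow_le _ k (proj1 Y)).
      pose proof (sig_tri t sg k ltac:(unfold sg; lra) ltac:(unfold sg; lra)).
      pose proof (pow_le t (tri k) ltac:(lra)). nra. }
    assert (A5 := IB k).
    set (a1 := Cmod (q ^ ((i + j) * (i + j) + s * (i + j)))) in *.
    set (a2 := (Cmod (q ^ tri i) * Cmod (w ^ i))%R) in *.
    set (a3 := (Cmod (/ Pq q i) * Cmod (/ Pq q j))%R) in *.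
    set (a4 := (Cmod (q ^ tri k) * Cmod ((w * q ^ (i + j)) ^ k))%R) in *.
    set (a5 := Cmod (/ Pq q k)) in *.
    assert (P1 : (0 <= a1)%R) by apply Cmod_ge_0.
    assert (P2 : (0 <= a2)%R) by (apply Rmult_le_pos; apply Cmod_ge_0).
    assert (P3 : (0 <= a3)%R) by (apply Rmult_le_pos; apply Cmod_ge_0).
    assert (P4 : (0 <= a4)%R) by (apply Rmult_le_pos; apply Cmod_ge_0).
    assert (P5 : (0 <= a5)%R) by apply Cmod_ge_0.
    replace (a1 * (Cmod (q ^ tri i) * Cmod (w ^ i)) * (Cmod (/ Pq q i) * Cmod (/ Pq q j)) *
             (Cmod (q ^ tri k) * Cmod ((w * q ^ (i + j)) ^ k)) * a5)%R with (a1 * a2 * a3 * a4 * a5)%R by reflexivity.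
    rewrite !pow_add.
    assert (0 <= sg ^ i)%R by (apply pow_le; lra). assert (0 <= sg ^ j)%R by (apply pow_le; lra).
    assert (0 <= sg ^ k)%R by (apply pow_le; lra).
    rewrite pow_add in A1.
    apply Rle_trans with ((sg ^ i * sg ^ j) * 1 * (Kc * Kc) * (2 * sg ^ k) * Kc)%R.
    + assert (B12 : (a1 * a2 <= sg ^ i * sg ^ j * 1)%R).
      { apply Rmult_le_compat; auto. }
      assert (Q12 : (0 <= a1 * a2)%R) by (apply Rmult_le_pos; auto).
      assert (B123 : (a1 * a2 * a3 <= sg ^ i * sg ^ j * 1 * (Kc * Kc))%R).
      { apply Rmult_le_compat; auto. }
      assert (Q123 : (0 <= a1 * a2 * a3)%R) by (apply Rmult_le_pos; auto).
      assert (B1234 : (a1 * a2 * a3 * a4 <= sg ^ i * sg ^ j * 1 * (Kc * Kc) * (2 * sg ^ k))%R).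
      { apply Rmult_le_compat; auto. }
      assert (Q1234 : (0 <= a1 * a2 * a3 * a4)%R) by (apply Rmult_le_pos; auto).
      apply Rmult_le_compat; auto.
    + right. ring.
  - intros i j.
    apply cv_ext with (fun n => q ^ ((i + j) * (i + j) + s * (i + j)) * (q ^ tri i * w ^ i / (Pq q i * Pq q j)) *
         sm (fun k => q ^ tri k * (w * q ^ (i + j)) ^ k / Pq q k) n).
    { intros n. rewrite <- sm_scal. apply sm_ext. intros k _. rewrite HF. unfold FF. auto. }
    apply cv_scal. apply euler; auto.
  - apply cv_ext with (sm (fun n => qpinf (- w) q * (q ^ (n * n + s * n) / Pq q n))).
    { intros N. apply sm_ext. intros n _.
      rewrite (sm_ext (S n) _ (fun i => (q ^ (n * n + s * n) * qpinf (- w * q ^ n) q / Pq q n) * (qb q n i * q ^ tri i * w ^ i))).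
      - rewrite sm_scal. rewrite qbinom by auto. rewrite (qpinf_split (- w) q n Hq). field. apply Pq_nz; auto.
      - intros i Hi. replace (i + (n - i))%nat with n by lia. rewrite qb_le by lia.
        replace (- (w * q ^ n)) with (- w * q ^ n) by ring. field. repeat split; apply Pq_nz; auto. }
    apply cv_ext with (fun N => qpinf (- w) q * sm (fun n => q ^ (n * n + s * n) / Pq q n) N).
    { intros N. rewrite sm_scal. auto. }
    apply cv_scal. apply RR; auto.
Qed.

Lemma pow_n_C (x : C) n : @pow_n C_Ring x n = x ^ n.
Proof. induction n. reflexivity. simpl. rewrite IHn. reflexivity. Qed.

Lemma pow_split r Y a b : r ^ (2 * Y + a + b) = (r * r) ^ Y * r ^ a * r ^ b.
Proof. rewrite !Cpow_add_r, Cpow_mult_r. replace (r ^ 2) with (r * r) by ring. ring. Qed.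

Lemma pow_split4 (q : C) A B Cc D : q ^ (A + B + Cc + D) = q ^ A * q ^ B * q ^ Cc * q ^ D.
Proof. rewrite !Cpow_add_r. ring. Qed.

Lemma summand_FF r d s (E : nat -> nat -> nat -> nat) :
  (Cmod (r * r) < 1)%R ->
  (forall i j k, E i j k = (2 * ((i + j) * (i + j) + s * (i + j) + tri i + tri k + (i + j) * k) + d * i + d * k)%nat) ->
  forall i j k, summand r E i j k = FF (r * r) (r ^ d) s i j k.
Proof.
  intros Hq HE i j k. unfold summand, FF, Pq. cbv zeta.
  rewrite pow_n_Cpow, HE.
  rewrite pow_split.
  rewrite (pow_split4 (r * r) ((i + j) * (i + j) + s * (i + j)) (tri i) (tri k) ((i + j) * k)).
  rewrite (Cpow_mult_l (r ^ d) ((r * r) ^ (i + j)) k).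
  rewrite <- (Cpow_mult_r (r * r) (i + j) k).
  rewrite <- (Cpow_mult_r r d i), <- (Cpow_mult_r r d k).
  field. repeat split; apply qpoch_nz; lra.
Qed.

Lemma ts_ext F L L' : triple_series F L -> L = L' -> triple_series F L'.
Proof. intros H E. subst. auto. Qed.

Lemma ts_extF F F' L : (forall i j k, F i j k = F' i j k) -> triple_series F' L -> triple_series F L.
Proof. intros E H. unfold triple_series, tsum3 in *.
  apply filterlim_ext with (2 := H). intros N. apply sum_n_ext. intros i. apply sum_n_ext. intros j.
  apply sum_n_ext. intros k. symmetry. apply E. Qed.

Theorem theorem4p6 (q r : C) (hq : Cmod q < 1) (hr : r * r = q) :
  triple_series (summand r (fun i j k => (Q2 i j k)%nat))
    (qpinf (- r) q / (qpinf q (pow_n q 5) * qpinf (pow_n q 4) (pow_n q 5)))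
  /\ triple_series (summand r (fun i j k => (Q2 i j k + i + k)%nat))
    (qpinf (- q) q / (qpinf q (pow_n q 5) * qpinf (pow_n q 4) (pow_n q 5)))
  /\ triple_series (summand r (fun i j k => ((3*i*i - i) + 2*j*j + (k*k - k)
                                             + 4*i*j + 2*i*k + 2*j*k)%nat))
    (RtoC 2 * (qpinf (- q) q / (qpinf q (pow_n q 5) * qpinf (pow_n q 4) (pow_n q 5))))
  /\ triple_series (summand r (fun i j k => (Q2 i j k + 2*i + 2*j)%nat))
    (qpinf (- r) q / (qpinf (pow_n q 2) (pow_n q 5) * qpinf (pow_n q 3) (pow_n q 5)))
  /\ triple_series (summand r (fun i j k => (Q2 i j k + 3*i + 2*j + k)%nat))
    (qpinf (- q) q / (qpinf (pow_n q 2) (pow_n q 5) * qpinf (pow_n q 3) (pow_n q 5)))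
  /\ triple_series (summand r (fun i j k => (3*i*i + 2*j*j + (k*k - k)
                                             + 4*i*j + 2*i*k + 2*j*k + i + 2*j)%nat))
    (RtoC 2 * (qpinf (- q) q / (qpinf (pow_n q 2) (pow_n q 5) * qpinf (pow_n q 3) (pow_n q 5)))).
Proof.
  subst q. rewrite !(pow_n_C (r * r) 5), !(pow_n_C (r * r) 4), !(pow_n_C (r * r) 3), !(pow_n_C (r * r) 2).
  assert (Hr : (Cmod r <= 1)%R).
  { rewrite Cmod_mult in hq. pose proof (Cmod_ge_0 r). nra. }
  assert (H1 : (Cmod (r ^ 1) <= 1)%R) by (replace (r ^ 1) with r by ring; auto).
  assert (H0 : (Cmod (r ^ 0) <= 1)%R) by (simpl; rewrite Cmod_1; lra).
  assert (H2 : (Cmod (r ^ 2) <= 1)%R) by (replace (r ^ 2) with (r * r) by ring; lra).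
  assert (T : forall a, (2 * tri a + a = a * a)%nat) by apply tri_2.
  repeat split.
  - eapply ts_ext. eapply ts_extF. apply (summand_FF r 1 0). auto.
    intros i j k. unfold Q2. pose proof (T i). pose proof (T k). nia.
    apply (main_gen (r * r) (r ^ 1) 0); auto; lia.
    rewrite ?pow_n_C. change (1 + 0)%nat with 1%nat. change (4 - 0)%nat with 4%nat.
    replace (r ^ 1) with r by ring. replace ((r * r) ^ 1) with (r * r) by ring. reflexivity.
  - eapply ts_ext. eapply ts_extF. apply (summand_FF r 2 0). auto.
    intros i j k. unfold Q2. pose proof (T i). pose proof (T k). nia.
    apply (main_gen (r * r) (r ^ 2) 0); auto; lia.
    rewrite ?pow_n_C. change (1 + 0)%nat with 1%nat. change (4 - 0)%nat with 4%nat.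
    replace (r ^ 2) with (r * r) by ring. replace ((r * r) ^ 1) with (r * r) by ring. reflexivity.
  - eapply ts_ext. eapply ts_extF. apply (summand_FF r 0 0). auto.
    intros i j k. pose proof (T i). pose proof (T k). nia.
    apply (main_gen (r * r) (r ^ 0) 0); auto; lia.
    rewrite ?pow_n_C. change (1 + 0)%nat with 1%nat. change (4 - 0)%nat with 4%nat.
    replace (r ^ 0) with (RtoC 1) by ring. replace ((r * r) ^ 1) with (r * r) by ring.
    replace (Copp (RtoC 1)) with (RtoC (-1)%R) by ring. rewrite qpinf_m1 by auto. unfold Cdiv. ring.
  - eapply ts_ext. eapply ts_extF. apply (summand_FF r 1 1). auto.
    intros i j k. unfold Q2. pose proof (T i). pose proof (T k). nia.
    apply (main_gen (r * r) (r ^ 1) 1); auto; lia.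
    rewrite ?pow_n_C. change (1 + 1)%nat with 2%nat. change (4 - 1)%nat with 3%nat.
    replace (r ^ 1) with r by ring. reflexivity.
  - eapply ts_ext. eapply ts_extF. apply (summand_FF r 2 1). auto.
    intros i j k. unfold Q2. pose proof (T i). pose proof (T k). nia.
    apply (main_gen (r * r) (r ^ 2) 1); auto; lia.
    rewrite ?pow_n_C. change (1 + 1)%nat with 2%nat. change (4 - 1)%nat with 3%nat.
    replace (r ^ 2) with (r * r) by ring. reflexivity.
  - eapply ts_ext. eapply ts_extF. apply (summand_FF r 0 1). auto.
    intros i j k. pose proof (T i). pose proof (T k). nia.
    apply (main_gen (r * r) (r ^ 0) 1); auto; lia.
    rewrite ?pow_n_C. change (1 + 1)%nat with 2%nat. change (4 - 1)%nat with 3%nat.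
    replace (r ^ 0) with (RtoC 1) by ring.
    replace (Copp (RtoC 1)) with (RtoC (-1)%R) by ring. rewrite qpinf_m1 by auto. unfold Cdiv. ring.
Qed.
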